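(* Let $\sigma\in\,]-\tfrac32,\tfrac12[$, $\sigma\neq-\tfrac12$, and let $(\lambda,\zeta)\in\mathbb{S}\times(\mathbb{Z}^2\setminus\{0\})$, $\zeta=(\xi,\eta)$, $\omega^2=\lambda+\nu|\zeta|^2$. The operator $$\mathcal{L}_0:\ (H^{\sigma+2}_\zeta)^2_{\mathrm{div}}\times\mathbb{C}\times H^{\sigma+2}_\zeta\to (H^{\sigma}_\zeta)^3,\qquad (u,v,p_0,\theta)\mapsto \begin{pmatrix}(\omega^2-\nu\partial_{zz})u+i\xi p_0\\ (\omega^2-\nu\partial_{zz})v+i\eta p_0\\ (\omega^2-\nu\partial_{zz})\theta\end{pmatrix}=\begin{pmatrix}f_1\\ f_2\\ f_3\end{pmatrix}$$ is continuous and bijective. Moreover $Y=(u,v)$ splits as $Y=Y_1+Y_2$ and, writing $F=(f_1,f_2)$, the following estimates hold with a constant $C$ independent of $(\lambda,\zeta)$: $$\begin{array}{lrcl} (a)&|\zeta|\,|p_0| &\leq& C\langle\omega\rangle^2 M_\sigma \|F\|_{\sigma,\zeta},\\ (b)&M_{-\sigma-2}[M_{-\sigma}]^{-1}\|Y_1\|_{\sigma,\zeta} + \|Y_1\|_{\sigma+2,\zeta} &\leq& C \langle\omega\rangle^2 M_\sigma M_{-\sigma-2}\|F\|_{\sigma,\zeta},\\ (c)&\langle\omega\rangle^2 \|Y_2\|_{\sigma,\zeta} + \|Y_2\|_{\sigma+2,\zeta} &\leq& C \|F\|_{\sigma,\zeta},\\ (d)& \langle\omega\rangle^2 \|\theta\|_{\sigma,\zeta}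 + \|\theta\|_{\sigma+2,\zeta} &\leq& C \|f_{3}\|_{\sigma,\zeta}. \end{array}$$
   Context: Let $a>0$, $\nu>0$, $\alpha,\beta,\gamma>0$ constants, $\Omega=\mathbb{T}^2\times(0,a)$. For $\zeta\in\mathbb{Z}^2\setminus\{0\}$ and $s\in\mathbb{R}$, $H^s_\zeta$ is the Hilbert space of functions $f(z)=\sum_{k\ge1}f_k e_k(z)$ on $(0,a)$, $e_k(z)=\sqrt{2/a}\sin(k\pi z/a)$, with norm $\|f\|_{s,\zeta}^2=\sum_{k\ge1}(1+\nu k^2+\nu|\zeta|^2)^s|f_k|^2$ (the same notation is used for the product norms on $(H^s_\zeta)^2$, $(H^s_\zeta)^3$), and $(H^{\sigma+2}_\zeta)^2_{\mathrm{div}}=\{(u,v)\in(H^{\sigma+2}_\zeta)^2:\int_0^a(\xi u+\eta v)\,dz=0\}$. Set $\langle\zeta\rangle=1+|\zeta|$, $\langle\omega\rangle^2=|\lambda|+\langle\zeta\rangle^2$ and $M_s(\lambda,\zeta)=\big(\sum_{k\ge1}\frac{1}{k^2(k^4+\langle\omega\rangle^4)(k^2+\langle\zeta\rangle^2)^s}\big)^{1/2}$ (defined for $s>-\tfrac52$). The set $\mathbb{S}=\{-\delta_2-\mu_1+i\mu_2:(\mu_1,\mu_2)\in\mathbb{R}^2,\ |\mu_2|\ge\mu_1/\delta_1\}$, where $0<\delta_2<\min(\frac{\nu\pi^2}{2a^2},\frac{\nu}{2})$ and $\delta_1>0$ is chosen small enough that $\mathbb{S}$ contains no eigenvalue of $-P$.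 Here $P$ is the linear Primitive Equations operator: with $\mathcal{H}$ (resp. $\mathcal{V}$) the closure in $L^2$ (resp. $H^1$) of smooth triples $X=(u,v,\theta)$ periodic in $x,y$, vanishing at $z=0,a$ and with $\int_0^a(\partial_x u+\partial_y v)dz=0$, inner products $(X,X')_{\mathcal{H}}=\int_\Omega(u\bar u'+v\bar v'+\frac{\beta}{\gamma}\theta\bar\theta')$, $(X,X')_{\mathcal{V}}=\int_\Omega(\nabla u\cdot\nabla\bar u'+\nabla v\cdot\nabla\bar v'+\frac{\beta}{\gamma}\nabla\theta\cdot\nabla\bar\theta')$, $w=-\int_0^z(\partial_xu+\partial_yv)$, $B(X,X')=-(\theta,w')_{L^2}+(w,\theta')_{L^2}$, $C(X,X')=-(v,u')_{L^2}+(u,v')_{L^2}$; $\lambda$ is an eigenvalue of $-P$ if there is $X\in\mathcal{V}\setminus\{0\}$ with $\lambda(X,X')_{\mathcal{H}}+\nu(X,X')_{\mathcal{V}}+\beta B(X,X')+\alpha C(X,X')=0$ for all $X'\in\mathcal{V}$. (Such a $\delta_1$ exists since all these eigenvalues satisfy $\Re\lambda\le-\nu\pi^2/a^2$ and $|\Im\lambda|\le2\alpha+2a\sqrt{\beta\gamma}\sqrt{-\Re\lambda/\nu}$.) *)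

(* Defs.v *)
From Stdlib Require Import Reals ZArith.
From Coquelicot Require Import Coquelicot.
Open Scope R_scope.

(* Coefficient sequences: f : nat -> C, the entry f n is the coefficient
   f_k of e_k with k = n+1 (so the index k >= 1). *)
Definition kR (n : nat) : R := INR (S n).

Definition ek (a : R) (n : nat) (z : R) : R := sqrt (2 / a) * sin (kR n * PI * z / a).

(* c_k = int_0^a e_k dz : the k-th coefficient of the constant function 1 *)
Definition one_coef (a : R) (n : nat) : R := RInt (ek a n) 0 a.

Definition zeta_sq (xi eta : Z) : R := IZR xi ^ 2 + IZR eta ^ 2.
Definition zeta_abs (xi eta : Z) : R := sqrt (zeta_sq xi eta).

Definition weight (nu : R) (xi eta : Z) (n : nat) : R :=
  1 + nu * kR n ^ 2 + nu * zeta_sq xi eta.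

Definition hterm (nu : R) (xi eta : Z) (s : R) (f : nat -> C) (n : nat) : R :=
  Rpower (weight nu xi eta n) s * Cmod (f n) ^ 2.

Definition inH (nu : R) (xi eta : Z) (s : R) (f : nat -> C) : Prop :=
  ex_series (hterm nu xi eta s f).

Definition hsq (nu : R) (xi eta : Z) (s : R) (f : nat -> C) : R :=
  Series (hterm nu xi eta s f).
Definition hnorm (nu : R) (xi eta : Z) (s : R) (f : nat -> C) : R :=
  sqrt (hsq nu xi eta s f).
Definition hnorm2 (nu : R) (xi eta : Z) (s : R) (u v : nat -> C) : R :=
  sqrt (hsq nu xi eta s u + hsq nu xi eta s v).
Definition hnorm3 (nu : R) (xi eta : Z) (s : R) (u v t : nat -> C) : R :=
  sqrt (hsq nu xi eta s u + hsq nu xi eta s v + hsq nu xi eta s t).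

Definition seq_sub (f g : nat -> C) : nat -> C := fun n => Cminus (f n) (g n).
Definition seq_add (f g : nat -> C) : nat -> C := fun n => Cplus (f n) (g n).

(* divergence condition  int_0^a (xi u + eta v) dz = 0, i.e.
   sum_k c_k (xi u_k + eta v_k) = 0 *)
Definition div_free (a : R) (xi eta : Z) (u v : nat -> C) : Prop :=
  is_series (fun n => Cmult (RtoC (one_coef a n))
                        (Cplus (Cmult (RtoC (IZR xi)) (u n)) (Cmult (RtoC (IZR eta)) (v n))))
            (RtoC 0).

Definition in_S (d1 d2 : R) (l : C) : Prop :=
  exists mu1 mu2 : R, l = ((- d2 - mu1)%R, mu2) /\ Rabs mu2 >= mu1 / d1.

Definition omega_sq (nu : R) (xi eta : Z) (l : C) : C :=
  Cplus l (RtoC (nu * zeta_sq xi eta)).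

Definition jzeta (xi eta : Z) : R := 1 + zeta_abs xi eta.
Definition jomega_sq (xi eta : Z) (l : C) : R := Cmod l + jzeta xi eta ^ 2.

Definition Ms (xi eta : Z) (l : C) (s : R) : R :=
  sqrt (Series (fun n => / (kR n ^ 2 * (kR n ^ 4 + jomega_sq xi eta l ^ 2)
                            * Rpower (kR n ^ 2 + jzeta xi eta ^ 2) s))).

(* symbol of omega^2 - nu d_zz on e_k : omega^2 + nu (k pi / a)^2 *)
Definition symb (a nu : R) (xi eta : Z) (l : C) (n : nat) : C :=
  Cplus (omega_sq nu xi eta l) (RtoC (nu * (kR n * PI / a) ^ 2)).

Definition L0_1 (a nu : R) (xi eta : Z) (l : C) (u : nat -> C) (p0 : C) : nat -> C :=
  fun n => Cplus (Cmult (symb a nu xi eta l n) (u n))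
                 (Cmult (Cmult Ci (RtoC (IZR xi))) (Cmult p0 (RtoC (one_coef a n)))).
Definition L0_2 (a nu : R) (xi eta : Z) (l : C) (v : nat -> C) (p0 : C) : nat -> C :=
  fun n => Cplus (Cmult (symb a nu xi eta l n) (v n))
                 (Cmult (Cmult Ci (RtoC (IZR eta))) (Cmult p0 (RtoC (one_coef a n)))).
Definition L0_3 (a nu : R) (xi eta : Z) (l : C) (t : nat -> C) : nat -> C :=
  fun n => Cmult (symb a nu xi eta l n) (t n).

Definition in_dom (a nu : R) (xi eta : Z) (sg : R) (u v : nat -> C) (t : nat -> C) : Prop :=
  inH nu xi eta (sg + 2) u /\ inH nu xi eta (sg + 2) v /\ div_free a xi eta u v
  /\ inH nu xi eta (sg + 2) t.

Definition dom_norm (nu : R) (xi eta : Z) (sg : R) (u v : nat -> C) (p0 : C) (t : nat -> C) : R :=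
  sqrt (hsq nu xi eta (sg + 2) u + hsq nu xi eta (sg + 2) v + Cmod p0 ^ 2
        + hsq nu xi eta (sg + 2) t).

(* Main.v *)
Require Import Defs.
From Stdlib Require Import Reals ZArith.
From Coquelicot Require Import Coquelicot.
Open Scope R_scope.
From Stdlib Require Import Lra Lia Psatz FunctionalExtensionality.



Lemma kR_ge1 n : 1 <= kR n.
Proof. unfold kR. rewrite S_INR. pose proof (pos_INR n). lra. Qed.

Lemma one_coef_eq a n : 0 < a ->
  one_coef a n = sqrt (2/a) * (a / (kR n * PI)) * (1 - cos (kR n * PI)).
Proof.
  intros ha. unfold one_coef.
  pose proof (kR_ge1 n) as hk. pose proof PI_RGT_0.
  set (k := kR n) in *.
  apply is_RInt_unique.
  set (F := fun z => - sqrt (2/a) * (a / (k*PI)) * cos (k*PI*z/a)).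
  replace (sqrt (2/a) * (a / (k * PI)) * (1 - cos (k * PI)))
    with (minus (F a) (F 0)).
  2:{ unfold F. unfold minus, plus, opp. simpl.
      replace (k*PI*a/a) with (k*PI) by (field; lra).
      replace (k*PI*0/a) with 0 by (field; lra). rewrite cos_0. ring. }
  apply (is_RInt_derive (V:=R_CompleteNormedModule) F).
  - intros x _. unfold F, ek.
    auto_derive; auto. unfold k, Rdiv. field. unfold k in hk; repeat split; lra.
  - intros y _. unfold ek. apply continuity_pt_filterlim.
    apply continuity_pt_mult. apply continuity_pt_const. intro; auto.
    apply (continuity_pt_comp (fun z => k*PI*z/a) sin).
    reg. apply continuity_sin.
Qed.

Lemma one_coef_sq_le a n : 0 < a -> one_coef a n ^ 2 <= 8 * a / PI^2 / kR n ^ 2.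
Proof.
  intros ha. rewrite one_coef_eq by lra.
  pose proof (kR_ge1 n) as hk. pose proof PI_RGT_0.
  pose proof (COS_bound (kR n * PI)).
  set (k := kR n) in *. set (c := cos _) in *.
  rewrite !Rpow_mult_distr. rewrite pow2_sqrt by (apply Rlt_le, Rdiv_lt_0_compat; lra).
  replace (8 * a / PI ^ 2 / k ^ 2) with (2/a * (a/(k*PI))^2 * 4) by (field; lra).
  apply Rmult_le_compat_l. apply Rmult_le_pos. apply Rlt_le, Rdiv_lt_0_compat; lra.
  apply pow2_ge_0. nra.
Qed.

Lemma one_coef0 a : 0 < a -> one_coef a 0 ^ 2 = 8 * a / PI^2.
Proof.
  intros ha. rewrite one_coef_eq by lra. unfold kR. simpl INR.
  rewrite Rmult_1_l, cos_PI. pose proof PI_RGT_0.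
  rewrite !Rpow_mult_distr. rewrite pow2_sqrt by (apply Rlt_le, Rdiv_lt_0_compat; lra).
  field. lra.
Qed.




Lemma ex_series_pos_bounded (a : nat -> R) M :
  (forall n, 0 <= a n) -> (forall N, sum_f_R0 a N <= M) -> ex_series a.
Proof.
  intros hp hb. apply ex_series_Reals_1.
  apply growing_cv.
  - intro n. simpl. specialize (hp (S n)). lra.
  - exists M. intros x [N ->]. apply hb.
Qed.

Lemma ex_series_telescope (a g : nat -> R) :
  (forall n, 0 <= a n <= g n - g (S n)) -> (forall n, 0 <= g n) -> ex_series a.
Proof.
  intros ha hg. apply (ex_series_pos_bounded a (g 0%nat)).
  - intro n. apply ha.
  - assert (H : forall N, sum_f_R0 a N <= g 0%nat - g (S N)).
    { induction N; simpl. apply ha. specialize (ha (S N)). lra. }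
    intro N. specialize (H N). specialize (hg (S N)). lra.
Qed.

Lemma ln_le_sub1 y : 0 < y -> ln y <= y - 1.
Proof.
  intros hy. destruct (Req_dec y 1) as [->|hne].
  - rewrite ln_1. lra.
  - rewrite <- (ln_exp (y - 1)). apply ln_le. lra.
    pose proof (exp_ineq1 (y-1)). assert (y - 1 <> 0) by lra. specialize (H H0). lra.
Qed.

Lemma exp_ge1 x : 1 + x <= exp x.
Proof.
  destruct (Req_dec x 0) as [->|h]. rewrite exp_0. lra.
  pose proof (exp_ineq1 x h). lra.
Qed.

Lemma pser_key q x : 0 < q -> 1 <= x ->
  Rpower (x+1) (-(1+q)) <= / q * (Rpower x (-q) - Rpower (x+1) (-q)).
Proof.
  intros hq hx. unfold Rpower.
  set (L := ln x). set (M := ln (x+1)).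
  assert (hML : / (x+1) <= M - L).
  { unfold M, L. rewrite <- ln_div by lra.
    pose proof (ln_le_sub1 (x/(x+1))) as h1.
    rewrite ln_div in h1 by lra. rewrite ln_div by lra.
    assert (x/(x+1) - 1 = - / (x+1)) by (field; lra).
    assert (0 < x/(x+1)) by (apply Rdiv_lt_0_compat; lra). lra. }
  assert (hM : exp (-M) = / (x+1)).
  { unfold M. rewrite exp_Ropp, exp_ln by lra. reflexivity. }
  assert (e1 : exp (-(1+q) * M) = exp (-M) * exp (-q*M)).
  { rewrite <- exp_plus. f_equal. ring. }
  assert (e2 : exp (-q * L) = exp (q*(M-L)) * exp (-q*M)).
  { rewrite <- exp_plus. f_equal. ring. }
  rewrite e1, e2, hM.
  pose proof (exp_ge1 (q*(M-L))).
  pose proof (exp_pos (-q*M)).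
  assert (q * / (x+1) <= q*(M-L)) by (apply Rmult_le_compat_l; lra).
  set (E := exp (- q * M)) in *. set (G := exp (q * (M - L))) in *.
  set (i := / (x+1)) in *.
  assert (hiq : q * / q = 1) by (field; lra).
  assert (0 < / q) by (apply Rinv_0_lt_compat; lra).
  assert (h3 : i <= / q * (G - 1)).
  { replace i with (/q * (q * i)) by (field; lra). apply Rmult_le_compat_l; lra. }
  assert (h4 : i * E <= / q * (G - 1) * E) by (apply Rmult_le_compat_r; lra).
  replace (/ q * (G * E - E)) with (/ q * (G - 1) * E) by ring. exact h4.
Qed.

Lemma pseries q : 0 < q -> ex_series (fun n => Rpower (kR n) (-(1+q))).
Proof.
  intros hq. apply ex_series_incr_1.
  apply (ex_series_telescope _ (fun n => / q * Rpower (kR n) (-q))).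
  - intro n. split. unfold Rpower. apply Rlt_le, exp_pos.
    replace (kR (S n)) with (kR n + 1) by (unfold kR; rewrite (S_INR (S n)); ring).
    rewrite <- Rmult_minus_distr_l. apply pser_key; auto. apply kR_ge1.
  - intro n. apply Rmult_le_pos. apply Rlt_le, Rinv_0_lt_compat; lra.
    unfold Rpower. apply Rlt_le, exp_pos.
Qed.


Lemma sum_n_fst (g : nat -> C) N :
  fst (sum_n g N) = sum_n (fun n => fst (g n)) N.
Proof.
  induction N. rewrite !sum_O. reflexivity.
  rewrite !sum_Sn. rewrite <- IHN. reflexivity.
Qed.

Lemma sum_n_snd (g : nat -> C) N :
  snd (sum_n g N) = sum_n (fun n => snd (g n)) N.
Proof.
  induction N. rewrite !sum_O. reflexivity.
  rewrite !sum_Sn. rewrite <- IHN. reflexivity.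
Qed.

Lemma C_series_parts (g : nat -> C) x y :
  is_series (fun n => fst (g n)) x -> is_series (fun n => snd (g n)) y ->
  is_series g (x, y).
Proof.
  unfold is_series. intros h1 h2.
  apply (proj2 (filterlim_locally _ _)). intro eps.
  pose proof (proj1 (filterlim_locally _ _) h1 eps) as h1'. clear h1. rename h1' into h1.
  pose proof (proj1 (filterlim_locally _ _) h2 eps) as h2'. clear h2. rename h2' into h2.
  destruct h1 as [N1 h1]. destruct h2 as [N2 h2].
  exists (max N1 N2). intros n hn.
  split.
  - change (ball x eps (fst (sum_n g n))). rewrite sum_n_fst. apply h1. lia.
  - change (ball y eps (snd (sum_n g n))). rewrite sum_n_snd. apply h2. lia.
Qed.

Lemma C_series_fst (g : nat -> C) l :
  is_series g l -> is_series (fun n => fst (g n)) (fst l).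
Proof.
  unfold is_series. intros h.
  apply (proj2 (filterlim_locally _ _)). intro eps.
  pose proof (proj1 (filterlim_locally _ _) h eps) as h'. clear h. rename h' into h.
  destruct h as [N h]. exists N. intros n hn.
  rewrite <- sum_n_fst. apply h. auto.
Qed.

Lemma C_series_snd (g : nat -> C) l :
  is_series g l -> is_series (fun n => snd (g n)) (snd l).
Proof.
  unfold is_series. intros h.
  apply (proj2 (filterlim_locally _ _)). intro eps.
  pose proof (proj1 (filterlim_locally _ _) h eps) as h'. clear h. rename h' into h.
  destruct h as [N h]. exists N. intros n hn.
  rewrite <- sum_n_snd. apply h. auto.
Qed.

Lemma C_series_scal (c : C) (g : nat -> C) l :
  is_series g l -> is_series (fun n => Cmult c (g n)) (Cmult c l).
Proof. intros h. apply (is_series_scal c g l h). Qed.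

Lemma C_series_ex (g : nat -> C) :
  ex_series (fun n => Cmod (g n)) -> exists l, is_series g l.
Proof.
  intros h. apply (ex_series_le (V := C_CompleteNormedModule) g (fun n => Cmod (g n))).
  intro n. right. reflexivity. exact h.
Qed.

Lemma C_series_unique (g : nat -> C) l1 l2 :
  is_series g l1 -> is_series g l2 -> l1 = l2.
Proof.
  intros h1 h2. exact (filterlim_locally_unique (V := C_NormedModule) _ _ _ h1 h2).
Qed.

Lemma Cmod_le_abs (z : C) : Cmod z <= Rabs (fst z) + Rabs (snd z).
Proof.
  destruct z as [x y]. unfold Cmod. simpl fst. simpl snd.
  pose proof (Rabs_pos x); pose proof (Rabs_pos y).
  rewrite <- (sqrt_Rsqr (Rabs x + Rabs y)) by lra.
  apply sqrt_le_1_alt. unfold Rsqr.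
  rewrite <- (pow2_abs x), <- (pow2_abs y). nra.
Qed.

Lemma Series_zero : Series (fun _ => 0) = 0.
Proof.
  rewrite (Series_ext _ (fun n => 0 * 0)) by (intro; ring).
  rewrite Series_scal_l. ring.
Qed.

Lemma Series_nonneg (a : nat -> R) : (forall n, 0 <= a n) -> ex_series a -> 0 <= Series a.
Proof.
  intros h he. rewrite <- Series_zero. apply Series_le; auto. intro n; split; auto; lra.
Qed.

Lemma series_le_gen (a b : nat -> R) la lb :
  is_series a la -> is_series b lb -> (forall n, a n <= b n) -> la <= lb.
Proof.
  intros ha hb hab.
  assert (hm : is_series (fun n => b n - a n) (lb - la)).
  { apply (is_series_minus b a lb la hb ha). }
  assert (0 <= Series (fun n => b n - a n)).
  { apply Series_nonneg. intro n; specialize (hab n); lra. exists (lb - la); exact hm. }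
  rewrite (is_series_unique _ _ hm) in H. lra.
Qed.

Lemma Cmod_series_le (g : nat -> C) l :
  is_series g l -> ex_series (fun n => Cmod (g n)) -> Cmod l <= Series (fun n => Cmod (g n)).
Proof.
  intros hg he.
  pose proof (C_series_fst _ _ (C_series_scal (Cconj l) g l hg)) as h1.
  pose proof (Series_correct _ he) as h2.
  pose proof (is_series_scal_l (Cmod l) _ _ h2) as h3.
  assert (hle : fst (Cmult (Cconj l) l) <= scal (Cmod l) (Series (fun n => Cmod (g n)))).
  { apply (series_le_gen _ _ _ _ h1 h3). intro n.
    change (scal (Cmod l) (Cmod (g n))) with (Cmod l * Cmod (g n)).
    rewrite <- (Cmod_conj l), <- Cmod_mult.
    eapply Rle_trans. apply Rle_abs. apply re_le_Cmod. }
  change (scal (Cmod l) (Series (fun n => Cmod (g n)))) with (Cmod l * Series (fun n => Cmod (g n))) in hle.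
  assert (e : fst (Cmult (Cconj l) l) = Cmod l ^ 2).
  { rewrite Cmod2_alt. destruct l as [x y]. simpl. ring. }
  rewrite e in hle.
  pose proof (Cmod_ge_0 l).
  destruct (Req_dec (Cmod l) 0) as [h0|h0].
  - rewrite h0. apply Series_nonneg. intro; apply Cmod_ge_0. exact he.
  - apply (Rmult_le_reg_l (Cmod l)). lra. simpl in hle. lra.
Qed.



Lemma zs_ge1 xi eta : (xi, eta) <> (0%Z, 0%Z) -> 1 <= zeta_sq xi eta.
Proof.
  intros h. unfold zeta_sq.
  assert (h' : (1 <= xi*xi + eta*eta)%Z).
  { destruct (Z.eq_dec xi 0); destruct (Z.eq_dec eta 0); subst; try congruence; nia. }
  apply IZR_le in h'. rewrite plus_IZR, !mult_IZR in h'. simpl. lra.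
Qed.

Lemma symb_re a nu xi eta l n :
  fst (symb a nu xi eta l n) = fst l + (nu * zeta_sq xi eta + nu * (kR n * PI / a) ^ 2).
Proof. destruct l; unfold symb, omega_sq, Cplus, RtoC; simpl. ring. Qed.

Lemma symb_im a nu xi eta l n : snd (symb a nu xi eta l n) = snd l.
Proof. destruct l; unfold symb, omega_sq, Cplus, RtoC; simpl. ring. Qed.

Lemma Cmod_ge_fst z : Rabs (fst z) <= Cmod z.
Proof. pose proof (Rmax_Cmod z). pose proof (Rmax_l (Rabs (fst z)) (Rabs (snd z))). lra. Qed.
Lemma Cmod_ge_snd z : Rabs (snd z) <= Cmod z.
Proof. pose proof (Rmax_Cmod z). pose proof (Rmax_r (Rabs (fst z)) (Rabs (snd z))). lra. Qed.

Lemma symb_lower_gen d1 d2 nu (l : C) (A m : R) :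
  0 < d1 -> 0 < d2 -> d2 < nu / 2 -> nu <= A ->
  in_S d1 d2 l ->
  Rabs (fst l + A) <= m -> Rabs (snd l) <= m ->
  A + Rabs (fst l) + Rabs (snd l) <= 4 * (1 + d1) * m.
Proof.
  intros hd1 hd2 hd2' hA [mu1 [mu2 [-> hmu]]] h1 h2. simpl in *.
  destruct (Rle_dec mu1 0) as [hm|hm].
  - destruct (Rle_dec 0 (- d2 - mu1)) as [hp|hp].
    + rewrite Rabs_right in h1 by lra. rewrite Rabs_right by lra. nra.
    + rewrite Rabs_right in h1 by lra. rewrite Rabs_left by lra. nra.
  - assert (hmu1 : mu1 <= d1 * m).
    { assert (mu1 / d1 <= m) by lra.
      apply (Rmult_le_compat_l d1) in H; [|lra].
      replace (d1 * (mu1/d1)) with mu1 in H by (field; lra). lra. }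
    rewrite Rabs_left by lra.
    assert (- d2 - mu1 + A <= m) by (pose proof (Rle_abs (- d2 - mu1 + A)); lra).
    nra.
Qed.


Section Main.
Variables (a nu d1 d2 sg : R).
Hypothesis ha : 0 < a.
Hypothesis hnu : 0 < nu.
Hypothesis hd1 : 0 < d1.
Hypothesis hd2 : 0 < d2.
Hypothesis hd2' : d2 < Rmin (nu * PI ^ 2 / (2 * a ^ 2)) (nu / 2).
Hypothesis hsg : -3/2 < sg < 1/2.

Lemma hd2a : d2 < nu / 2.
Proof. pose proof (Rmin_r (nu * PI ^ 2 / (2 * a ^ 2)) (nu / 2)). lra. Qed.
Lemma hd2b : d2 < nu * PI ^ 2 / (2 * a ^ 2).
Proof. pose proof (Rmin_l (nu * PI ^ 2 / (2 * a ^ 2)) (nu / 2)). lra. Qed.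

Definition Af xi eta n := nu * zeta_sq xi eta + nu * (kR n * PI / a) ^ 2.
Definition Df (l : C) xi eta n := Af xi eta n + Rabs (fst l) + Rabs (snd l).

Lemma A_ge xi eta n : 1 <= zeta_sq xi eta -> nu * zeta_sq xi eta <= Af xi eta n /\ nu <= Af xi eta n.
Proof.
  intros hz. unfold Af. pose proof (pow2_ge_0 (kR n * PI / a)). nra.
Qed.

Lemma D_ge l xi eta n : 1 <= zeta_sq xi eta ->
  Af xi eta n <= Df l xi eta n /\ Cmod l <= Df l xi eta n /\ nu <= Df l xi eta n.
Proof.
  intros hz. unfold Df. pose proof (A_ge xi eta n hz). pose proof (Cmod_le_abs l).
  pose proof (Rabs_pos (fst l)). pose proof (Rabs_pos (snd l)). lra.
Qed.

Lemma symb_lower l xi eta n : in_S d1 d2 l -> 1 <= zeta_sq xi eta ->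
  Df l xi eta n <= 4 * (1 + d1) * Cmod (symb a nu xi eta l n).
Proof.
  intros hS hz. unfold Df.
  apply (symb_lower_gen d1 d2 nu l); auto. apply hd2a. apply A_ge; auto.
  - unfold Af. rewrite <- (symb_re a nu xi eta l n). apply Cmod_ge_fst.
  - rewrite <- (symb_im a nu xi eta l n). apply Cmod_ge_snd.
Qed.

Lemma symb_upper l xi eta n : 1 <= zeta_sq xi eta ->
  Cmod (symb a nu xi eta l n) <= Df l xi eta n.
Proof.
  intros hz. eapply Rle_trans. apply Cmod_le_abs.
  rewrite symb_re, symb_im. unfold Df.
  pose proof (A_ge xi eta n hz).
  pose proof (Rabs_triang (fst l) (Af xi eta n)). unfold Af in *.
  rewrite (Rabs_right (nu * zeta_sq xi eta + nu * (kR n * PI / a) ^ 2)) in H0 by lra. lra.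
Qed.

Lemma symb_pos l xi eta n : in_S d1 d2 l -> 1 <= zeta_sq xi eta ->
  0 < Cmod (symb a nu xi eta l n).
Proof.
  intros hS hz. pose proof (symb_lower l xi eta n hS hz). pose proof (D_ge l xi eta n hz).
  nra.
Qed.

Lemma symb_nz l xi eta n : in_S d1 d2 l -> 1 <= zeta_sq xi eta ->
  symb a nu xi eta l n <> 0%C.
Proof.
  intros hS hz h. pose proof (symb_pos l xi eta n hS hz). rewrite h, Cmod_0 in H. lra.
Qed.

Lemma sqrt_zs_le z : 0 <= z -> 2 * sqrt z <= 1 + z.
Proof.
  intros hz. pose proof (sqrt_sqrt z hz). pose proof (pow2_ge_0 (sqrt z - 1)). nra.
Qed.

Lemma jz_bounds xi eta : 1 <= zeta_sq xi eta ->
  1 + zeta_sq xi eta <= jzeta xi eta ^ 2 <= 2 + 2 * zeta_sq xi eta.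
Proof.
  intros hz. unfold jzeta, zeta_abs.
  pose proof (sqrt_sqrt (zeta_sq xi eta) ltac:(lra)). pose proof (sqrt_pos (zeta_sq xi eta)).
  pose proof (sqrt_zs_le (zeta_sq xi eta) ltac:(lra)). nra.
Qed.

Lemma w2_le l xi eta n : 1 <= zeta_sq xi eta ->
  jomega_sq xi eta l <= (1 + 4 / nu) * Df l xi eta n.
Proof.
  intros hz. unfold jomega_sq.
  pose proof (jz_bounds xi eta hz). pose proof (D_ge l xi eta n hz).
  pose proof (A_ge xi eta n hz).
  assert (jzeta xi eta ^ 2 <= 4 / nu * Df l xi eta n).
  { apply Rle_trans with (4 / nu * (nu * zeta_sq xi eta)).
    replace (4 / nu * (nu * zeta_sq xi eta)) with (4 * zeta_sq xi eta) by (field; lra). lra.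
    apply Rmult_le_compat_l. apply Rlt_le, Rdiv_lt_0_compat; lra. lra. }
  unfold Df in *. pose proof (Cmod_le_abs l). lra.
Qed.

Lemma k2_le l xi eta n : 1 <= zeta_sq xi eta ->
  kR n ^ 2 <= a ^ 2 / (nu * PI ^ 2) * Df l xi eta n.
Proof.
  intros hz. pose proof (D_ge l xi eta n hz). pose proof PI_RGT_0.
  apply Rle_trans with (a ^ 2 / (nu * PI ^ 2) * Af xi eta n).
  - unfold Af. replace (kR n ^ 2) with (a ^ 2 / (nu * PI ^ 2) * (nu * (kR n * PI / a) ^ 2))
      by (field; repeat split; lra).
    apply Rmult_le_compat_l. apply Rlt_le, Rdiv_lt_0_compat. apply pow_lt; lra. apply Rmult_lt_0_compat; [lra| apply pow_lt; lra].
    pose proof (A_ge xi eta n hz). unfold Af in *. assert (0 <= nu * zeta_sq xi eta) by nra. lra.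
  - destruct H as [H _]. apply Rmult_le_compat_l. apply Rlt_le, Rdiv_lt_0_compat. apply pow_lt; lra. apply Rmult_lt_0_compat; [lra| apply pow_lt; lra]. lra.
Qed.

Lemma weight_le l xi eta n : 1 <= zeta_sq xi eta ->
  weight nu xi eta n <= (1 / nu + a ^ 2 / PI ^ 2 + 1) * Df l xi eta n.
Proof.
  intros hz. pose proof (D_ge l xi eta n hz). pose proof PI_RGT_0.
  pose proof (k2_le l xi eta n hz). unfold weight.
  assert (1 <= 1 / nu * Df l xi eta n).
  { apply Rle_trans with (1/nu * nu). right; field; lra.
    apply Rmult_le_compat_l. apply Rlt_le, Rdiv_lt_0_compat; lra. lra. }
  assert (nu * kR n ^ 2 <= a ^ 2 / PI ^ 2 * Df l xi eta n).
  { apply Rle_trans with (nu * (a ^ 2 / (nu * PI ^ 2) * Df l xi eta n)).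
    apply Rmult_le_compat_l; lra. right. field. repeat split; lra. }
  assert (nu * zeta_sq xi eta <= Df l xi eta n).
  { pose proof (A_ge xi eta n hz). lra. }
  lra.
Qed.

Lemma weight_B xi eta n : 1 <= zeta_sq xi eta ->
  Rmin 1 nu / 2 * (kR n ^ 2 + jzeta xi eta ^ 2) <= weight nu xi eta n
  <= Rmax 1 nu * (kR n ^ 2 + jzeta xi eta ^ 2).
Proof.
  intros hz. pose proof (jz_bounds xi eta hz). unfold weight.
  pose proof (pow2_ge_0 (kR n)).
  pose proof (Rmin_l 1 nu). pose proof (Rmin_r 1 nu).
  pose proof (Rmax_l 1 nu). pose proof (Rmax_r 1 nu).
  assert (0 < Rmin 1 nu) by (apply Rmin_glb_lt; lra).
  split; nra.
Qed.

Lemma weight_pos xi eta n : 0 < weight nu xi eta n.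
Proof.
  unfold weight, zeta_sq. pose proof (pow2_ge_0 (kR n)).
  pose proof (pow2_ge_0 (IZR xi)). pose proof (pow2_ge_0 (IZR eta)). nra.
Qed.


Lemma rp_pos x t : 0 < Rpower x t.
Proof. unfold Rpower. apply exp_pos. Qed.

Lemma rp_pow x (n : nat) : 0 < x -> x ^ n = Rpower x (INR n).
Proof. intros hx. rewrite Rpower_pow by auto. reflexivity. Qed.

Lemma Rpow_cmp W B c1 c2 t : 0 < c1 -> 0 < B -> c1 * B <= W <= c2 * B ->
  Rpower W t <= (Rpower c1 t + Rpower c2 t) * Rpower B t.
Proof.
  intros hc1 hB [h1 h2].
  assert (hW : 0 < W) by nra. assert (hc2 : 0 < c2) by nra.
  pose proof (rp_pos c1 t). pose proof (rp_pos c2 t). pose proof (rp_pos B t).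
  destruct (Rle_dec 0 t) as [ht|ht].
  - apply Rle_trans with (Rpower c2 t * Rpower B t).
    rewrite Rpower_mult_distr by auto. apply Rle_Rpower_l. lra. lra.
    nra.
  - apply Rle_trans with (Rpower c1 t * Rpower B t); [|nra].
    rewrite Rpower_mult_distr by auto.
    assert (e : forall x, Rpower x t = / Rpower x (- t)).
    { intro x. rewrite <- Rpower_Ropp. f_equal. ring. }
    rewrite (e W), (e (c1 * B)).
    apply Rinv_le_contravar. apply rp_pos.
    apply Rle_Rpower_l. lra. split; nra.
Qed.

Definition Msterm (xi eta : Z) (l : C) (s : R) (n : nat) : R :=
  / (kR n ^ 2 * (kR n ^ 4 + jomega_sq xi eta l ^ 2) * Rpower (kR n ^ 2 + jzeta xi eta ^ 2) s).

Lemma jz_pos xi eta : 1 <= jzeta xi eta.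
Proof. unfold jzeta, zeta_abs. pose proof (sqrt_pos (zeta_sq xi eta)). lra. Qed.

Lemma w2_pos xi eta l : 1 <= jomega_sq xi eta l.
Proof. unfold jomega_sq. pose proof (Cmod_ge_0 l). pose proof (jz_pos xi eta). nra. Qed.

Lemma Msterm_pos xi eta l s n : 0 < Msterm xi eta l s n.
Proof.
  unfold Msterm. apply Rinv_0_lt_compat. pose proof (kR_ge1 n).
  pose proof (w2_pos xi eta l). pose proof (rp_pos (kR n ^ 2 + jzeta xi eta ^ 2) s).
  apply Rmult_lt_0_compat; [|auto]. apply Rmult_lt_0_compat. nra.
  pose proof (pow2_ge_0 (kR n ^ 2)). pose proof (pow2_ge_0 (jomega_sq xi eta l)).
  replace (kR n ^ 4) with ((kR n ^ 2)^2) by ring. nra.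
Qed.

Lemma Msterm_ex xi eta l s : -5/2 < s -> ex_series (Msterm xi eta l s).
Proof.
  intros hs.
  set (J := jzeta xi eta ^ 2).
  assert (hJ : 1 <= J) by (unfold J; pose proof (jz_pos xi eta); nra).
  set (K := Rpower 1 (- s) + Rpower (1 + J) (- s)).
  assert (hK : 0 < K) by (unfold K; pose proof (rp_pos 1 (-s)); pose proof (rp_pos (1+J) (-s)); lra).
  apply (ex_series_le (V := R_CompleteNormedModule) _ (fun n => K * Rpower (kR n) (-(1 + (5 + 2*s))))).
  - intro n. pose proof (Msterm_pos xi eta l s n).
    change (norm (Msterm xi eta l s n)) with (Rabs (Msterm xi eta l s n)).
    rewrite Rabs_right by lra.
    pose proof (kR_ge1 n) as hk.
    assert (hk2 : 1 <= kR n ^ 2) by nra.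
    assert (hB : Rpower (kR n ^ 2 + J) (- s) <= K * Rpower (kR n ^ 2) (- s)).
    { apply Rpow_cmp; try lra. split. nra. nra. }
    assert (e1 : Rpower (kR n ^ 2) (- s) = Rpower (kR n) (- (2 * s))).
    { rewrite (rp_pow (kR n) 2) by lra. rewrite Rpower_mult. f_equal. simpl. ring. }
    assert (e2 : Rpower (kR n) (- (1 + (5 + 2 * s))) = / kR n ^ 6 * Rpower (kR n) (- (2 * s))).
    { rewrite (rp_pow (kR n) 6) by lra. rewrite <- Rpower_Ropp, <- Rpower_plus. f_equal.
      simpl. ring. }
    rewrite e2. unfold Msterm. fold J.
    rewrite Rinv_mult. rewrite <- Rpower_Ropp.
    pose proof (rp_pos (kR n ^ 2 + J) (- s)).
    assert (h6 : / (kR n ^ 2 * (kR n ^ 4 + jomega_sq xi eta l ^ 2)) <= / kR n ^ 6).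
    { apply Rinv_le_contravar. apply pow_lt; lra.
      pose proof (pow2_ge_0 (jomega_sq xi eta l)).
      replace (kR n ^ 6) with (kR n ^ 2 * kR n ^ 4) by ring.
      apply Rmult_le_compat_l. lra. lra. }
    apply Rle_trans with (/ kR n ^ 6 * Rpower (kR n ^ 2 + J) (- s)).
    apply Rmult_le_compat_r; lra.
    rewrite <- e1.
    assert (0 < / kR n ^ 6) by (apply Rinv_0_lt_compat, pow_lt; lra).
    nra.
  - apply (ex_series_ext (fun n => Rpower (kR n) (- (1 + (5 + 2 * s))) * K)). intro. apply Rmult_comm.
    apply ex_series_scal_r. apply pseries. lra.
Qed.

Lemma Ms_sq xi eta l s : -5/2 < s -> Ms xi eta l s ^ 2 = Series (Msterm xi eta l s).
Proof.
  intros hs. unfold Ms. rewrite pow2_sqrt. reflexivity.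
  apply Series_nonneg. intro n. apply Rlt_le, Msterm_pos. apply Msterm_ex; auto.
Qed.

Lemma Ms_pos xi eta l s : -5/2 < s -> 0 < Ms xi eta l s.
Proof.
  intros hs. unfold Ms. apply sqrt_lt_R0.
  pose proof (Msterm_ex xi eta l s hs) as he.
  change (Series (fun n => / (kR n ^ 2 * (kR n ^ 4 + jomega_sq xi eta l ^ 2) * Rpower (kR n ^ 2 + jzeta xi eta ^ 2) s)))
    with (Series (Msterm xi eta l s)).
  rewrite Series_incr_1 by auto.
  pose proof (Msterm_pos xi eta l s 0).
  assert (0 <= Series (fun k => Msterm xi eta l s (S k))).
  { apply Series_nonneg. intro; apply Rlt_le, Msterm_pos. apply ex_series_incr_1 in he. exact he. }
  lra.
Qed.


Lemma frac_bound X P M k2 E Bs al be ga :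
  0 <= X -> 0 <= P -> 0 < M -> 0 < k2 -> 0 < E -> 0 < Bs ->
  X * k2 <= al -> P * Bs <= be -> E <= ga * M ^ 2 ->
  X * P / M ^ 2 <= al * be * ga * / (k2 * E * Bs).
Proof.
  intros hX hP hM hk hE hB h1 h2 h3.
  assert (e : X * P / M ^ 2 = (X * k2) * (P * Bs) * (E / M ^ 2) * / (k2 * E * Bs)).
  { field. repeat split; lra. }
  rewrite e.
  assert (h4 : E / M ^ 2 <= ga).
  { apply (Rmult_le_reg_r (M^2)). apply pow_lt; lra.
    replace (E / M ^ 2 * M ^ 2) with E by (field; lra). lra. }
  assert (0 < / (k2 * E * Bs)) by (apply Rinv_0_lt_compat; apply Rmult_lt_0_compat; [apply Rmult_lt_0_compat|]; lra).
  apply Rmult_le_compat_r. lra.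
  assert (0 <= E / M ^ 2) by (apply Rmult_le_pos; [lra| apply Rlt_le, Rinv_0_lt_compat, pow_lt; lra]).
  apply Rmult_le_compat; try lra.
  apply Rmult_le_pos; nra.
  apply Rmult_le_compat; nra.
Qed.

Definition Qterm xi eta l s n :=
  one_coef a n ^ 2 * Rpower (weight nu xi eta n) (- s) / Cmod (symb a nu xi eta l n) ^ 2.

Definition KQ s := (8 * a / PI ^ 2) * (Rpower (Rmin 1 nu / 2) (- s) + Rpower (Rmax 1 nu) (- s))
   * ((1 + 4 / nu + a ^ 2 / (nu * PI ^ 2)) * (4 * (1 + d1))) ^ 2.

Lemma KQ_pos s : 0 < KQ s.
Proof.
  unfold KQ. pose proof PI_RGT_0. pose proof (rp_pos (Rmin 1 nu / 2) (-s)).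
  pose proof (rp_pos (Rmax 1 nu) (-s)).
  apply Rmult_lt_0_compat. apply Rmult_lt_0_compat. apply Rdiv_lt_0_compat. lra. apply pow_lt; lra.
  lra. apply pow_lt. apply Rmult_lt_0_compat; [|lra].
  assert (0 < 4 / nu) by (apply Rdiv_lt_0_compat; lra).
  assert (0 < a ^ 2 / (nu * PI ^ 2)) by (apply Rdiv_lt_0_compat; [apply pow_lt; lra | apply Rmult_lt_0_compat; [lra | apply pow_lt; lra]]).
  lra.
Qed.

Lemma Qterm_nonneg xi eta l s n : in_S d1 d2 l -> 1 <= zeta_sq xi eta -> 0 <= Qterm xi eta l s n.
Proof.
  intros hS hz. pose proof (symb_pos l xi eta n hS hz).
  unfold Qterm. apply Rmult_le_pos. apply Rmult_le_pos. apply pow2_ge_0. apply Rlt_le, rp_pos.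
  apply Rlt_le, Rinv_0_lt_compat. apply pow_lt; lra.
Qed.

Lemma Qterm_le xi eta l s n : in_S d1 d2 l -> 1 <= zeta_sq xi eta ->
  Qterm xi eta l s n <= KQ s * Msterm xi eta l s n.
Proof.
  intros hS hz.
  pose proof (symb_pos l xi eta n hS hz) as hM.
  pose proof (kR_ge1 n) as hk.
  pose proof (w2_pos xi eta l) as hw.
  pose proof (jz_pos xi eta) as hj.
  pose proof PI_RGT_0.
  set (B := kR n ^ 2 + jzeta xi eta ^ 2).
  assert (hB : 0 < B) by (unfold B; nra).
  unfold Qterm, Msterm, KQ. fold B.
  apply frac_bound.
  - apply pow2_ge_0.
  - apply Rlt_le, rp_pos.
  - auto.
  - nra.
  - pose proof (pow2_ge_0 (jomega_sq xi eta l)). replace (kR n ^ 4) with ((kR n^2)^2) by ring. nra.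
  - apply rp_pos.
  - pose proof (one_coef_sq_le a n ha).
    apply (Rmult_le_compat_r (kR n ^ 2)) in H0; [|nra].
    replace (8 * a / PI ^ 2 / kR n ^ 2 * kR n ^ 2) with (8 * a / PI ^ 2) in H0 by (field; split; lra).
    exact H0.
  - pose proof (Rpow_cmp (weight nu xi eta n) B (Rmin 1 nu / 2) (Rmax 1 nu) (- s)) as h.
    assert (0 < Rmin 1 nu) by (apply Rmin_glb_lt; lra).
    specialize (h ltac:(lra) hB (weight_B xi eta n hz)).
    pose proof (rp_pos B s).
    apply (Rmult_le_compat_r (Rpower B s)) in h; [|lra].
    rewrite Rmult_assoc, <- Rpower_plus in h.
    replace (- s + s) with 0 in h by ring. rewrite Rpower_O in h by lra. lra.
  - pose proof (w2_le l xi eta n hz). pose proof (k2_le l xi eta n hz).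
    pose proof (symb_lower l xi eta n hS hz).
    pose proof (D_ge l xi eta n hz).
    set (D := Df l xi eta n) in *. set (M := Cmod (symb a nu xi eta l n)) in *.
    set (w := jomega_sq xi eta l) in *.
    set (K1 := 1 + 4 / nu) in *. set (K2 := a ^ 2 / (nu * PI ^ 2)) in *.
    assert (0 < K2) by (unfold K2; apply Rdiv_lt_0_compat; [apply pow_lt; lra | apply Rmult_lt_0_compat; [lra | apply pow_lt; lra]]).
    assert (h1 : kR n ^ 2 + w <= (K1 + K2) * D) by lra.
    assert (h2 : kR n ^ 4 + w ^ 2 <= (kR n ^ 2 + w) ^ 2) by nra.
    assert (h3 : (K1 + K2) * D <= (K1 + K2) * (4 * (1 + d1)) * M).
    { rewrite Rmult_assoc. apply Rmult_le_compat_l. unfold K1.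
      assert (0 < 4 / nu) by (apply Rdiv_lt_0_compat; lra). lra. lra. }
    assert (0 <= kR n ^ 2 + w) by nra.
    assert (h4 : (kR n ^ 2 + w) ^ 2 <= ((K1 + K2) * (4 * (1 + d1)) * M) ^ 2) by (apply pow_incr; lra).
    apply Rle_trans with (((K1 + K2) * (4 * (1 + d1)) * M) ^ 2). lra. right; ring.
Qed.


Lemma Qser xi eta l s : in_S d1 d2 l -> 1 <= zeta_sq xi eta -> -5/2 < s ->
  ex_series (Qterm xi eta l s) /\ Series (Qterm xi eta l s) <= KQ s * Ms xi eta l s ^ 2.
Proof.
  intros hS hz hs.
  pose proof (Msterm_ex xi eta l s hs) as he.
  assert (he2 : ex_series (fun n => KQ s * Msterm xi eta l s n)).
  { apply (ex_series_ext (fun n => Msterm xi eta l s n * KQ s)). intro; apply Rmult_comm.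
    apply ex_series_scal_r. auto. }
  split.
  - apply (ex_series_le (V := R_CompleteNormedModule) _ (fun n => KQ s * Msterm xi eta l s n)).
    2: exact he2. intro n. change (norm (Qterm xi eta l s n)) with (Rabs (Qterm xi eta l s n)).
    rewrite Rabs_right by (apply Rle_ge, Qterm_nonneg; auto). apply Qterm_le; auto.
  - rewrite Ms_sq by auto. rewrite <- Series_scal_l. apply Series_le; auto.
    intro n. split. apply Qterm_nonneg; auto. apply Qterm_le; auto.
Qed.

Definition sterm xi eta l n : C := Cdiv (RtoC (one_coef a n ^ 2)) (symb a nu xi eta l n).

Lemma Rpower_m2 x : 0 < x -> Rpower x (-(1+1)) = / x ^ 2.
Proof. intros hx. rewrite Rpower_Ropp. f_equal. rewrite (rp_pow x 2) by auto. f_equal. Qed.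

Lemma sterm_ex xi eta l : in_S d1 d2 l -> 1 <= zeta_sq xi eta ->
  ex_series (fun n => Cmod (sterm xi eta l n)).
Proof.
  intros hS hz.
  set (K := 8 * a / PI ^ 2 * (4 * (1 + d1) / nu)).
  apply (ex_series_le (V := R_CompleteNormedModule) _ (fun n => Rpower (kR n) (-(1+1)) * K)).
  - intro n. change (norm (Cmod (sterm xi eta l n))) with (Rabs (Cmod (sterm xi eta l n))).
    rewrite Rabs_right by (apply Rle_ge, Cmod_ge_0).
    pose proof (symb_pos l xi eta n hS hz). pose proof (symb_lower l xi eta n hS hz).
    pose proof (D_ge l xi eta n hz). pose proof (kR_ge1 n). pose proof PI_RGT_0.
    unfold sterm. rewrite Cmod_div by (apply symb_nz; auto).
    rewrite Cmod_R. rewrite Rabs_right by (apply Rle_ge, pow2_ge_0).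
    rewrite Rpower_m2 by lra.
    pose proof (one_coef_sq_le a n ha).
    set (M := Cmod (symb a nu xi eta l n)) in *.
    assert (hM : / M <= 4 * (1 + d1) / nu).
    { apply (Rmult_le_reg_r M). auto. rewrite Rinv_l by lra.
      apply (Rmult_le_reg_r nu). auto. unfold Rdiv.
      replace (4 * (1 + d1) * / nu * M * nu) with (4 * (1 + d1) * M) by (field; lra). lra. }
    unfold Rdiv at 1. unfold K.
    replace (/ kR n ^ 2 * (8 * a / PI ^ 2 * (4 * (1 + d1) / nu))) with
      ((8 * a / PI ^ 2 / kR n ^ 2) * (4 * (1 + d1) / nu)) by (field; repeat split; lra).
    apply Rmult_le_compat. apply pow2_ge_0. apply Rlt_le, Rinv_0_lt_compat; lra. auto. auto.
  - apply ex_series_scal_r. apply pseries. lra.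
Qed.

Lemma Cdiv_R_expl (b : R) (z : C) : z <> 0%C ->
  Cdiv (RtoC b) z = (b * fst z / (fst z ^ 2 + snd z ^ 2), - (b * snd z) / (fst z ^ 2 + snd z ^ 2)).
Proof.
  intros hz. destruct z as [x y]. unfold Cdiv, Cmult, Cinv, RtoC. simpl.
  assert (hn : x ^ 2 + y ^ 2 <> 0).
  { intro h. apply hz. assert (x = 0) by nra. assert (y = 0) by nra. subst. reflexivity. }
  f_equal; field; simpl in hn; rewrite !Rmult_1_r in hn; exact hn.
Qed.

Definition cS := (8 * a / PI ^ 2) / (2 * (nu + nu * (PI / a) ^ 2 + 2) + (4 * d1 + 1) ^ 2).

Lemma cS_pos : 0 < cS.
Proof.
  unfold cS. pose proof PI_RGT_0. apply Rdiv_lt_0_compat. apply Rdiv_lt_0_compat. lra. apply pow_lt; lra.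
  pose proof (pow2_ge_0 (PI / a)). pose proof (pow2_ge_0 (4 * d1 + 1)). nra.
Qed.

Lemma S_lower xi eta l Sv : in_S d1 d2 l -> 1 <= zeta_sq xi eta ->
  is_series (sterm xi eta l) Sv -> cS <= Cmod Sv * jomega_sq xi eta l.
Proof.
  intros hS hz hser.
  pose proof (w2_pos xi eta l) as hw.
  pose proof PI_RGT_0.
  assert (hb0 : one_coef a 0 ^ 2 = 8 * a / PI ^ 2) by (apply one_coef0; auto).
  assert (hk0 : kR 0 = 1) by (unfold kR; simpl; ring).
  set (b0 := 8 * a / PI ^ 2) in *.
  assert (hb0p : 0 < b0) by (unfold b0; apply Rdiv_lt_0_compat; [lra | apply pow_lt; lra]).
  set (a1 := nu * (PI / a) ^ 2).
  assert (ha1 : 0 <= a1) by (unfold a1; pose proof (pow2_ge_0 (PI/a)); nra).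
  assert (gen : forall e : C, (forall n, 0 <= fst (Cmult e (sterm xi eta l n))) ->
     fst (Cmult e (sterm xi eta l 0)) <= Cmod e * Cmod Sv).
  { intros e he.
    pose proof (C_series_fst _ _ (C_series_scal e _ _ hser)) as h1.
    assert (hex : ex_series (fun n => fst (Cmult e (sterm xi eta l n)))) by (eexists; exact h1).
    pose proof (is_series_unique _ _ h1) as hu.
    rewrite Series_incr_1 in hu by auto.
    assert (0 <= Series (fun k => fst (Cmult e (sterm xi eta l (S k))))).
    { apply Series_nonneg. intro; auto. apply ex_series_incr_1 in hex. exact hex. }
    rewrite <- Cmod_mult.
    pose proof (Cmod_ge_fst (Cmult e Sv)). pose proof (Rle_abs (fst (Cmult e Sv))). lra. }
  destruct hS as [mu1 [mu2 [hl hmu]]].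
  assert (hnz : forall n, symb a nu xi eta l n <> 0%C).
  { intro n; apply symb_nz; auto. exists mu1, mu2; auto. }
  assert (hkp : forall n, (PI / a) ^ 2 <= (kR n * PI / a) ^ 2).
  { intro n. pose proof (kR_ge1 n). replace (kR n * PI / a) with (kR n * (PI / a)) by (field; lra).
    rewrite Rpow_mult_distr. pose proof (pow2_ge_0 (PI/a)). assert (1 <= kR n ^ 2) by nra. nra. }
  set (Y := snd l).
  set (sgn := if Rle_dec 0 Y then 1 else -1).
  assert (hsgY : sgn * Y = Rabs Y).
  { unfold sgn. destruct (Rle_dec 0 Y). rewrite Rabs_right; lra. rewrite Rabs_left; lra. }
  assert (hsg2 : sgn * sgn = 1) by (unfold sgn; destruct (Rle_dec 0 Y); lra).
  assert (hst : forall n, sterm xi eta l n =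
     (one_coef a n ^ 2 * fst (symb a nu xi eta l n) / Cmod (symb a nu xi eta l n) ^ 2,
      - (one_coef a n ^ 2 * Y) / Cmod (symb a nu xi eta l n) ^ 2)).
  { intro n. unfold sterm. rewrite Cdiv_R_expl by auto. rewrite Cmod2_alt. unfold Y, Re, Im.
    rewrite symb_im. reflexivity. }
  pose proof (Cmod_ge_snd l) as hYl. fold Y in hYl.
  assert (hlw : Cmod l <= jomega_sq xi eta l).
  { unfold jomega_sq. pose proof (jz_pos xi eta). nra. }
  destruct (Rle_dec 0 (fst l + nu * zeta_sq xi eta + a1)) as [hc|hc].
  -
    set (e := (1, sgn) : C).
    assert (hcm : Cmod e <= 2).
    { unfold e, Cmod. simpl. replace (1 * 1 + sgn * (sgn * 1)) with 2 by nra.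
      rewrite <- (sqrt_Rsqr 2) by lra. apply sqrt_le_1_alt. unfold Rsqr. lra. }
    assert (hre : forall n, fst (Cmult e (sterm xi eta l n)) =
       one_coef a n ^ 2 * (fst (symb a nu xi eta l n) + Rabs Y) / Cmod (symb a nu xi eta l n) ^ 2).
    { intro n. rewrite hst. unfold e, Cmult. simpl fst. simpl snd. rewrite <- hsgY.
      pose proof (symb_pos l xi eta n ltac:(exists mu1, mu2; auto) hz). field. lra. }
    assert (hxn : forall n, 0 <= fst (symb a nu xi eta l n)).
    { intro n. rewrite symb_re. specialize (hkp n). unfold a1 in hc. nra. }
    assert (hpos : forall n, 0 <= fst (Cmult e (sterm xi eta l n))).
    { intro n. rewrite hre. pose proof (symb_pos l xi eta n ltac:(exists mu1, mu2; auto) hz).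
      apply Rmult_le_pos. apply Rmult_le_pos. apply pow2_ge_0. specialize (hxn n).
      pose proof (Rabs_pos Y). lra. apply Rlt_le, Rinv_0_lt_compat, pow_lt; lra. }
    pose proof (gen e hpos) as h0. rewrite hre in h0. rewrite hb0 in h0.
    set (M := Cmod (symb a nu xi eta l 0)) in *.
    assert (hM : 0 < M) by (apply symb_pos; auto; exists mu1, mu2; auto).
    assert (hMx : M <= fst (symb a nu xi eta l 0) + Rabs Y).
    { unfold M. eapply Rle_trans. apply Cmod_le_abs. rewrite symb_im. fold Y.
      rewrite (Rabs_right (fst _)) by (apply Rle_ge; auto). lra. }
    assert (hMD : M <= (nu + nu * (PI / a) ^ 2 + 2) * jomega_sq xi eta l).
    { unfold M. eapply Rle_trans. apply symb_upper; auto. unfold Df, Af.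
      rewrite hk0, Rmult_1_l. pose proof (jz_bounds xi eta hz).
      pose proof (Cmod_ge_fst l). pose proof (Cmod_ge_snd l).
      assert (zeta_sq xi eta <= jomega_sq xi eta l) by (unfold jomega_sq; pose proof (Cmod_ge_0 l); lra).
      pose proof (pow2_ge_0 (PI / a)).
      assert (nu * zeta_sq xi eta <= nu * jomega_sq xi eta l) by (apply Rmult_le_compat_l; lra).
      assert (nu * (PI / a) ^ 2 <= nu * (PI / a) ^ 2 * jomega_sq xi eta l).
      { assert (0 <= nu * (PI / a) ^ 2) by nra. nra. }
      lra. }
    assert (h1 : b0 / M <= 2 * Cmod Sv).
    { apply Rle_trans with (b0 * (fst (symb a nu xi eta l 0) + Rabs Y) / M ^ 2).
      apply (Rmult_le_reg_r (M^2)). apply pow_lt; lra.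
      replace (b0 / M * M ^ 2) with (b0 * M) by (field; lra).
      replace (b0 * (fst (symb a nu xi eta l 0) + Rabs Y) / M ^ 2 * M ^ 2)
        with (b0 * (fst (symb a nu xi eta l 0) + Rabs Y)) by (field; lra).
      apply Rmult_le_compat_l; lra.
      pose proof (Cmod_ge_0 Sv). nra. }
    unfold cS. fold b0.
    set (K4 := nu + nu * (PI / a) ^ 2 + 2) in *.
    assert (0 < K4) by (unfold K4; pose proof (pow2_ge_0 (PI/a)); nra).
    assert (hK : 2 * K4 <= 2 * K4 + (4 * d1 + 1) ^ 2) by (pose proof (pow2_ge_0 (4*d1+1)); lra).
    apply Rle_trans with (b0 / (2 * K4)).
    apply Rmult_le_compat_l. lra. apply Rinv_le_contravar; lra.
    apply (Rmult_le_reg_r (2 * K4)). nra.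
    replace (b0 / (2 * K4) * (2 * K4)) with b0 by (field; lra).
    assert (b0 <= 2 * Cmod Sv * M).
    { apply (Rmult_le_compat_r M) in h1; [|lra]. replace (b0 / M * M) with b0 in h1 by (field; lra). lra. }
    pose proof (Cmod_ge_0 Sv).
    assert (2 * Cmod Sv * M <= 2 * Cmod Sv * (K4 * jomega_sq xi eta l)) by (apply Rmult_le_compat_l; nra).
    nra.
  -
    set (e := (0, sgn) : C).
    assert (hcm : Cmod e = 1).
    { unfold e, Cmod. simpl. replace (0 * (0 * 1) + sgn * (sgn * 1)) with 1 by nra. apply sqrt_1. }
    assert (hre : forall n, fst (Cmult e (sterm xi eta l n)) =
       one_coef a n ^ 2 * Rabs Y / Cmod (symb a nu xi eta l n) ^ 2).
    { intro n. rewrite hst. unfold e, Cmult. simpl fst. simpl snd. rewrite <- hsgY.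
      pose proof (symb_pos l xi eta n ltac:(exists mu1, mu2; auto) hz). field. lra. }
    assert (hpos : forall n, 0 <= fst (Cmult e (sterm xi eta l n))).
    { intro n. rewrite hre. pose proof (symb_pos l xi eta n ltac:(exists mu1, mu2; auto) hz).
      apply Rmult_le_pos. apply Rmult_le_pos. apply pow2_ge_0.
      apply Rabs_pos. apply Rlt_le, Rinv_0_lt_compat, pow_lt; lra. }
    pose proof (gen e hpos) as h0. rewrite hre, hb0, hcm, Rmult_1_l in h0.
    set (M := Cmod (symb a nu xi eta l 0)) in *.
    assert (hM : 0 < M) by (apply symb_pos; auto; exists mu1, mu2; auto).
    rewrite hl in hc. simpl fst in hc.
    assert (hY : Y = mu2) by (unfold Y; rewrite hl; reflexivity).
    pose proof hd2a.
    assert (hnz2 : nu <= nu * zeta_sq xi eta) by nra.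
    assert (hmu1 : d2 < mu1) by lra.
    assert (hmuY : mu1 <= d1 * Rabs Y).
    { rewrite hY. assert (mu1 / d1 <= Rabs mu2) by lra.
      apply (Rmult_le_compat_l d1) in H1; [|lra].
      replace (d1 * (mu1/d1)) with mu1 in H1 by (field; lra). lra. }
    assert (hMY : M <= (4 * d1 + 1) * Rabs Y).
    { unfold M. eapply Rle_trans. apply symb_upper; auto. unfold Df, Af.
      rewrite hk0, Rmult_1_l. fold a1. fold Y. rewrite hl. simpl fst.
      rewrite Rabs_left by lra. lra. }
    assert (hY0 : 0 < Rabs Y) by (pose proof (Rabs_pos Y); nra).
    assert (hYw : Rabs Y <= jomega_sq xi eta l) by lra.
    set (K5 := 4 * d1 + 1) in *.
    assert (h2 : b0 <= K5 ^ 2 * Rabs Y * Cmod Sv).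
    { assert (b0 * Rabs Y <= Cmod Sv * M ^ 2).
      { apply (Rmult_le_compat_r (M ^ 2)) in h0; [|apply pow2_ge_0].
        replace (b0 * Rabs Y / M ^ 2 * M ^ 2) with (b0 * Rabs Y) in h0 by (field; lra). lra. }
      assert (M ^ 2 <= (K5 * Rabs Y) ^ 2) by (apply pow_incr; lra).
      pose proof (Cmod_ge_0 Sv).
      assert (b0 * Rabs Y <= Cmod Sv * (K5 * Rabs Y) ^ 2) by nra.
      apply (Rmult_le_reg_r (Rabs Y)). auto. nra. }
    unfold cS. fold b0.
    set (K4 := nu + nu * (PI / a) ^ 2 + 2) in *.
    assert (0 < K4) by (unfold K4; pose proof (pow2_ge_0 (PI/a)); nra).
    assert (hK5 : 1 <= K5) by (unfold K5; lra).
    assert (hK : K5 ^ 2 <= 2 * K4 + K5 ^ 2) by lra.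
    change (b0 / (2 * K4 + K5 ^ 2) <= Cmod Sv * jomega_sq xi eta l).
    assert (0 < K5 ^ 2) by (apply pow_lt; lra).
    apply Rle_trans with (b0 / K5 ^ 2).
    apply Rmult_le_compat_l. lra. apply Rinv_le_contravar. lra. lra.
    apply (Rmult_le_reg_r (K5 ^ 2)). lra.
    replace (b0 / K5 ^ 2 * K5 ^ 2) with b0 by (field; lra).
    pose proof (Cmod_ge_0 Sv).
    assert (K5 ^ 2 * Rabs Y * Cmod Sv <= K5 ^ 2 * jomega_sq xi eta l * Cmod Sv).
    { apply Rmult_le_compat_r. auto. apply Rmult_le_compat_l. lra. auto. }
    lra.
Qed.


Lemma ser_le_K (u b : nat -> R) K :
  (forall n, 0 <= u n <= K * b n) -> ex_series b -> ex_series u /\ Series u <= K * Series b.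
Proof.
  intros h hb.
  assert (he2 : ex_series (fun n => K * b n)).
  { apply (ex_series_ext (fun n => b n * K)). intro; apply Rmult_comm.
    apply ex_series_scal_r. auto. }
  split.
  - apply (ex_series_le (V := R_CompleteNormedModule) _ (fun n => K * b n)); auto.
    intro n. change (norm (u n)) with (Rabs (u n)). rewrite Rabs_right by (apply Rle_ge; apply h). apply h.
  - rewrite <- Series_scal_l. apply Series_le; auto.
Qed.

Lemma hterm_nonneg xi eta s f n : 0 <= hterm nu xi eta s f n.
Proof. unfold hterm. apply Rmult_le_pos. apply Rlt_le, rp_pos. apply pow2_ge_0. Qed.

Lemma hsq_nonneg xi eta s f : inH nu xi eta s f -> 0 <= hsq nu xi eta s f.
Proof. intros h. apply Series_nonneg. intro; apply hterm_nonneg. exact h. Qed.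

Lemma Cmod_sub_sq (x y : C) : Cmod (Cminus x y) ^ 2 <= 2 * Cmod x ^ 2 + 2 * Cmod y ^ 2.
Proof.
  assert (Cmod (Cminus x y) <= Cmod x + Cmod y).
  { unfold Cminus. eapply Rle_trans. apply Cmod_triangle. rewrite Cmod_opp. lra. }
  pose proof (Cmod_ge_0 (Cminus x y)). pose proof (Cmod_ge_0 x). pose proof (Cmod_ge_0 y).
  assert (Cmod (Cminus x y) ^ 2 <= (Cmod x + Cmod y) ^ 2) by (apply pow_incr; lra).
  pose proof (pow2_ge_0 (Cmod x - Cmod y)). nra.
Qed.

Lemma Cmod_add_sq (x y : C) : Cmod (Cplus x y) ^ 2 <= 2 * Cmod x ^ 2 + 2 * Cmod y ^ 2.
Proof.
  assert (Cmod (Cplus x y) <= Cmod x + Cmod y) by apply Cmod_triangle.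
  pose proof (Cmod_ge_0 (Cplus x y)). pose proof (Cmod_ge_0 x). pose proof (Cmod_ge_0 y).
  assert (Cmod (Cplus x y) ^ 2 <= (Cmod x + Cmod y) ^ 2) by (apply pow_incr; lra).
  pose proof (pow2_ge_0 (Cmod x - Cmod y)). nra.
Qed.

Lemma inH_sub xi eta s f g : inH nu xi eta s f -> inH nu xi eta s g ->
  inH nu xi eta s (seq_sub f g) /\
  hsq nu xi eta s (seq_sub f g) <= 2 * hsq nu xi eta s f + 2 * hsq nu xi eta s g.
Proof.
  intros hf hg.
  assert (hs : ex_series (fun n => hterm nu xi eta s f n + hterm nu xi eta s g n)).
  { apply (ex_series_plus (V := R_NormedModule)); auto. }
  assert (hb : forall n, 0 <= hterm nu xi eta s (seq_sub f g) n <=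
     2 * (hterm nu xi eta s f n + hterm nu xi eta s g n)).
  { intro n. split. apply hterm_nonneg. unfold hterm, seq_sub.
    pose proof (Cmod_sub_sq (f n) (g n)). pose proof (rp_pos (weight nu xi eta n) s). nra. }
  destruct (ser_le_K _ _ 2 hb hs) as [h1 h2].
  split. exact h1. unfold hsq. rewrite Series_plus in h2 by auto. lra.
Qed.

Lemma inH_add xi eta s f g : inH nu xi eta s f -> inH nu xi eta s g ->
  inH nu xi eta s (seq_add f g).
Proof.
  intros hf hg.
  assert (hs : ex_series (fun n => hterm nu xi eta s f n + hterm nu xi eta s g n)).
  { apply (ex_series_plus (V := R_NormedModule)); auto. }
  assert (hb : forall n, 0 <= hterm nu xi eta s (seq_add f g) n <=
     2 * (hterm nu xi eta s f n + hterm nu xi eta s g n)).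
  { intro n. split. apply hterm_nonneg. unfold hterm, seq_add.
    pose proof (Cmod_add_sq (f n) (g n)). pose proof (rp_pos (weight nu xi eta n) s). nra. }
  destruct (ser_le_K _ _ 2 hb hs) as [h1 h2].
  exact h1.
Qed.

Lemma opt_ineq A B X : 0 <= A -> 0 <= B ->
  (forall t, 0 < t -> 2 * X <= A / t + t * B) -> X <= sqrt (A * B).
Proof.
  intros hA hB h.
  destruct (Rle_dec X 0) as [hX|hX].
  - pose proof (sqrt_pos (A * B)). lra.
  - destruct (Req_dec B 0) as [hB0|hB0].
    + exfalso. specialize (h (A / X + 1)).
      assert (0 < A / X + 1) by (assert (0 <= A / X) by (apply Rmult_le_pos; [lra| apply Rlt_le, Rinv_0_lt_compat; lra]); lra).
      specialize (h H). rewrite hB0, Rmult_0_r, Rplus_0_r in h.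
      assert (A / (A / X + 1) < X).
      { apply (Rmult_lt_reg_r (A / X + 1)). auto. unfold Rdiv at 1.
        rewrite Rmult_assoc, Rinv_l, Rmult_1_r by lra.
        replace (X * (A / X + 1)) with (A + X) by (field; lra). lra. }
      lra.
    + assert (0 < B) by lra. specialize (h (X / B)).
      assert (0 < X / B) by (apply Rdiv_lt_0_compat; lra).
      specialize (h H0).
      replace (X / B * B) with X in h by (field; lra).
      assert (hXX : X * X <= A * B).
      { assert (X <= A / (X / B)) by lra.
        replace (A / (X / B)) with (A * B / X) in H1 by (field; split; lra).
        apply (Rmult_le_compat_r X) in H1; [|lra].
        replace (A * B / X * X) with (A * B) in H1 by (field; lra). lra. }
      rewrite <- (sqrt_Rsqr X) by lra. apply sqrt_le_1_alt. unfold Rsqr. lra.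
Qed.


Definition tterm xi eta l (f1 f2 : nat -> C) n : C :=
  Cdiv (Cmult (RtoC (one_coef a n))
    (Cplus (Cmult (RtoC (IZR xi)) (f1 n)) (Cmult (RtoC (IZR eta)) (f2 n))))
    (symb a nu xi eta l n).

Lemma tterm_bound xi eta l f1 f2 s t n : in_S d1 d2 l -> 1 <= zeta_sq xi eta -> 0 < t ->
  2 * Cmod (tterm xi eta l f1 f2 n) <=
  Qterm xi eta l s n / t + t * zeta_sq xi eta * (hterm nu xi eta s f1 n + hterm nu xi eta s f2 n).
Proof.
  intros hS hz ht.
  pose proof (symb_pos l xi eta n hS hz) as hM.
  set (M := Cmod (symb a nu xi eta l n)) in *.
  set (P := Rpower (weight nu xi eta n) s).
  assert (hP : 0 < P) by apply rp_pos.
  assert (hPi : Rpower (weight nu xi eta n) (- s) = / P).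
  { unfold P. apply Rpower_Ropp. }
  set (al := Cmod (f1 n)). set (be := Cmod (f2 n)).
  set (X := Rabs (IZR xi)). set (E := Rabs (IZR eta)).
  set (c := Rabs (one_coef a n)).
  assert (hal : 0 <= al) by apply Cmod_ge_0. assert (hbe : 0 <= be) by apply Cmod_ge_0.
  assert (hX : 0 <= X) by apply Rabs_pos. assert (hE : 0 <= E) by apply Rabs_pos.
  assert (hc : 0 <= c) by apply Rabs_pos.
  set (y := X * al + E * be).
  assert (hy : 0 <= y) by (unfold y; nra).
  assert (h1 : Cmod (tterm xi eta l f1 f2 n) <= c / M * y).
  { unfold tterm. rewrite Cmod_div by (apply symb_nz; auto). rewrite Cmod_mult, Cmod_R. fold c M.
    assert (Cmod (Cplus (Cmult (RtoC (IZR xi)) (f1 n)) (Cmult (RtoC (IZR eta)) (f2 n))) <= y).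
    { eapply Rle_trans. apply Cmod_triangle. rewrite !Cmod_mult, !Cmod_R. fold X E al be y. lra. }
    set (Z := Cmod (Cplus (Cmult (RtoC (IZR xi)) (f1 n)) (Cmult (RtoC (IZR eta)) (f2 n)))) in *. unfold Rdiv.
    replace (c * Z * / M) with (c * / M * Z) by ring.
    apply Rmult_le_compat_l; auto. apply Rmult_le_pos; auto. apply Rlt_le, Rinv_0_lt_compat; auto. }
  assert (hy2 : y ^ 2 <= zeta_sq xi eta * (al ^ 2 + be ^ 2)).
  { unfold zeta_sq. rewrite <- (pow2_abs (IZR xi)), <- (pow2_abs (IZR eta)). fold X E.
    unfold y. pose proof (pow2_ge_0 (X * be - E * al)). nra. }
  set (x := c / M) in *.
  assert (hx : 0 <= x) by (unfold x; apply Rmult_le_pos; [auto | apply Rlt_le, Rinv_0_lt_compat; auto]).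
  assert (hQ : Qterm xi eta l s n = x ^ 2 / P).
  { unfold Qterm. rewrite hPi. fold M. unfold x, c. rewrite <- (pow2_abs (one_coef a n)). field. split; lra. }
  assert (h2 : 2 * (x * y) <= x ^ 2 / P / t + t * P * y ^ 2).
  { assert (e : x ^ 2 / P / t + t * P * y ^ 2 - 2 * (x * y) = (x - t * P * y) ^ 2 / (P * t)).
    { field. split; lra. }
    assert (0 <= (x - t * P * y) ^ 2 / (P * t)).
    { apply Rmult_le_pos. apply pow2_ge_0. apply Rlt_le, Rinv_0_lt_compat. nra. }
    lra. }
  assert (h3 : t * P * y ^ 2 <= t * zeta_sq xi eta * (hterm nu xi eta s f1 n + hterm nu xi eta s f2 n)).
  { unfold hterm. fold P al be.
    replace (t * zeta_sq xi eta * (P * al ^ 2 + P * be ^ 2)) with (t * P * (zeta_sq xi eta * (al ^ 2 + be ^ 2))) by ring.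
    apply Rmult_le_compat_l. nra. auto. }
  rewrite hQ. lra.
Qed.

Lemma tterm_series xi eta l f1 f2 : in_S d1 d2 l -> 1 <= zeta_sq xi eta ->
  inH nu xi eta sg f1 -> inH nu xi eta sg f2 ->
  ex_series (fun n => Cmod (tterm xi eta l f1 f2 n)) /\
  Series (fun n => Cmod (tterm xi eta l f1 f2 n)) <=
    sqrt (Series (Qterm xi eta l sg) * (zeta_sq xi eta * (hsq nu xi eta sg f1 + hsq nu xi eta sg f2))).
Proof.
  intros hS hz h1 h2.
  destruct (Qser xi eta l sg hS hz ltac:(lra)) as [hQ _].
  set (Rt := fun (t : R) n => Qterm xi eta l sg n * / t + t * zeta_sq xi eta * (hterm nu xi eta sg f1 n + hterm nu xi eta sg f2 n)).
  assert (hR : forall t, ex_series (Rt t)).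
  { intro t. unfold Rt. apply (ex_series_plus (V := R_NormedModule)).
    apply (ex_series_ext (fun n => Qterm xi eta l sg n * / t)). reflexivity. apply ex_series_scal_r. auto.
    apply (ex_series_ext (fun n => (hterm nu xi eta sg f1 n + hterm nu xi eta sg f2 n) * (t * zeta_sq xi eta))).
    intro; apply Rmult_comm. apply ex_series_scal_r.
    apply (ex_series_plus (V := R_NormedModule)); auto. }
  assert (hRS : forall t, Series (Rt t) = Series (Qterm xi eta l sg) / t + t * zeta_sq xi eta * (hsq nu xi eta sg f1 + hsq nu xi eta sg f2)).
  { intro t. unfold Rt. rewrite Series_plus.
    rewrite Series_scal_r. rewrite Series_scal_l. rewrite Series_plus by auto. reflexivity.
    apply ex_series_scal_r. auto.
    apply (ex_series_ext (fun n => (hterm nu xi eta sg f1 n + hterm nu xi eta sg f2 n) * (t * zeta_sq xi eta))).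
    intro; apply Rmult_comm. apply ex_series_scal_r.
    apply (ex_series_plus (V := R_NormedModule)); auto. }
  assert (hb : forall t, 0 < t -> forall n, 0 <= 2 * Cmod (tterm xi eta l f1 f2 n) <= Rt t n).
  { intros t ht n. split. pose proof (Cmod_ge_0 (tterm xi eta l f1 f2 n)). lra.
    unfold Rt. apply tterm_bound; auto. }
  assert (hex : ex_series (fun n => 2 * Cmod (tterm xi eta l f1 f2 n))).
  { assert (hb1 : forall n, 0 <= 2 * Cmod (tterm xi eta l f1 f2 n) <= 1 * Rt 1 n).
    { intro n. rewrite Rmult_1_l. apply hb. lra. }
    destruct (ser_le_K _ (Rt 1) 1 hb1 (hR 1)). auto. }
  assert (hex' : ex_series (fun n => Cmod (tterm xi eta l f1 f2 n))).
  { assert (e2 : forall x : R, 2 * x * / 2 = x) by (intro; field).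
    apply (ex_series_ext (fun n => 2 * Cmod (tterm xi eta l f1 f2 n) * / 2)). intro; apply e2.
    apply ex_series_scal_r. auto. }
  split. auto.
  apply opt_ineq.
  - apply Series_nonneg. intro n. apply Qterm_nonneg; auto. auto.
  - pose proof (hsq_nonneg _ _ _ _ h1). pose proof (hsq_nonneg _ _ _ _ h2). nra.
  - intros t ht. rewrite <- Series_scal_l.
    replace (Series (Qterm xi eta l sg) / t + t * (zeta_sq xi eta * (hsq nu xi eta sg f1 + hsq nu xi eta sg f2)))
      with (Series (Rt t)) by (rewrite hRS; ring).
    apply Series_le. apply hb; auto. auto.
Qed.


Lemma div_rel xi eta l u v p0 n : symb a nu xi eta l n <> 0%C ->
  Cmult (RtoC (one_coef a n)) (Cplus (Cmult (RtoC (IZR xi)) (u n)) (Cmult (RtoC (IZR eta)) (v n)))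
  = Cminus (tterm xi eta l (L0_1 a nu xi eta l u p0) (L0_2 a nu xi eta l v p0) n)
           (Cmult (Cmult Ci (Cmult p0 (RtoC (zeta_sq xi eta)))) (sterm xi eta l n)).
Proof.
  intros hnz. unfold tterm, sterm, L0_1, L0_2, zeta_sq.
  rewrite (RtoC_plus (IZR xi ^ 2)), (RtoC_pow (IZR xi)), (RtoC_pow (IZR eta)), (RtoC_pow (one_coef a n)).
  generalize (RtoC (one_coef a n)) (RtoC (IZR xi)) (RtoC (IZR eta)) (symb a nu xi eta l n) (u n) (v n) hnz.
  clear. intros c x y s u v h. field. exact h.
Qed.

Lemma series_C_minus (g h : nat -> C) G H :
  is_series g G -> is_series h H -> is_series (fun n => Cminus (g n) (h n)) (Cminus G H).
Proof.
  intros h1 h2. apply (is_series_minus g h G H h1 h2).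
Qed.

Lemma p0_rel xi eta l u v t p0 (T Sv : C) : in_S d1 d2 l -> 1 <= zeta_sq xi eta ->
  in_dom a nu xi eta sg u v t ->
  is_series (tterm xi eta l (L0_1 a nu xi eta l u p0) (L0_2 a nu xi eta l v p0)) T ->
  is_series (sterm xi eta l) Sv ->
  T = Cmult (Cmult Ci (Cmult p0 (RtoC (zeta_sq xi eta)))) Sv.
Proof.
  intros hS hz [_ [_ [hdiv _]]] hT hSv.
  set (K := Cmult Ci (Cmult p0 (RtoC (zeta_sq xi eta)))).
  pose proof (series_C_minus _ _ _ _ hT (C_series_scal K _ _ hSv)) as h1.
  unfold div_free in hdiv.
  assert (h2 : is_series (fun n => Cminus (tterm xi eta l (L0_1 a nu xi eta l u p0) (L0_2 a nu xi eta l v p0) n)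
      (Cmult K (sterm xi eta l n))) (RtoC 0)).
  { apply (is_series_ext (fun n => Cmult (RtoC (one_coef a n))
        (Cplus (Cmult (RtoC (IZR xi)) (u n)) (Cmult (RtoC (IZR eta)) (v n))))); [|exact hdiv].
    intro n. unfold K. rewrite (div_rel xi eta l u v p0 n) by (apply symb_nz; auto). reflexivity. }
  pose proof (C_series_unique _ _ _ h1 h2) as e.
  assert (e' : Cminus T (Cmult K Sv) = RtoC 0) by exact e.
  apply (f_equal (fun z => Cplus z (Cmult K Sv))) in e'.
  replace (Cplus (Cminus T (Cmult K Sv)) (Cmult K Sv)) with T in e' by ring.
  rewrite e'. ring.
Qed.


Lemma rp2 x s : 0 < x -> Rpower x (s + 2) = Rpower x s * x ^ 2.
Proof. intros hx. rewrite Rpower_plus, (rp_pow x 2) by auto. reflexivity. Qed.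

Definition Kd (l : C) := 1 + (PI / a) ^ 2 + Rabs (fst l) + Rabs (snd l).

Lemma Kd_pos l : 1 <= Kd l.
Proof. unfold Kd. pose proof (pow2_ge_0 (PI/a)). pose proof (Rabs_pos (fst l)). pose proof (Rabs_pos (snd l)). lra. Qed.

Lemma symb_le_w l xi eta n : 1 <= zeta_sq xi eta ->
  Cmod (symb a nu xi eta l n) <= Kd l * weight nu xi eta n.
Proof.
  intros hz. eapply Rle_trans. apply symb_upper; auto. unfold Df, Af, Kd, weight.
  pose proof (pow2_ge_0 (PI/a)). pose proof (Rabs_pos (fst l)). pose proof (Rabs_pos (snd l)).
  pose proof (pow2_ge_0 (kR n)).
  replace (nu * (kR n * PI / a) ^ 2) with ((PI / a) ^ 2 * (nu * kR n ^ 2)) by (field; lra).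
  assert (0 <= nu * kR n ^ 2) by nra. assert (1 <= nu * zeta_sq xi eta + 1) by nra.
  nra.
Qed.

Definition cw (n : nat) (xi eta : Z) := one_coef a n ^ 2 * Rpower (weight nu xi eta n) sg.

Lemma cw_nonneg xi eta n : 0 <= cw n xi eta.
Proof. unfold cw. apply Rmult_le_pos. apply pow2_ge_0. apply Rlt_le, rp_pos. Qed.

Lemma cw_ex xi eta : 1 <= zeta_sq xi eta -> ex_series (fun n => cw n xi eta).
Proof.
  intros hz.
  set (Kz := 1 + nu + nu * zeta_sq xi eta).
  set (K := 8 * a / PI ^ 2 * (Rpower nu sg + Rpower Kz sg)).
  apply (ex_series_le (V := R_CompleteNormedModule) _ (fun n => Rpower (kR n) (-(1 + (1 - 2 * sg))) * K)).
  - intro n. change (norm (cw n xi eta)) with (Rabs (cw n xi eta)).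
    rewrite Rabs_right by (apply Rle_ge, cw_nonneg).
    pose proof (kR_ge1 n) as hk. pose proof PI_RGT_0.
    assert (hk2 : 1 <= kR n ^ 2) by nra.
    assert (hw : Rpower (weight nu xi eta n) sg <= (Rpower nu sg + Rpower Kz sg) * Rpower (kR n ^ 2) sg).
    { apply Rpow_cmp. auto. lra. unfold weight, Kz. assert (0 <= nu * zeta_sq xi eta) by nra. split. nra. assert (nu * zeta_sq xi eta <= nu * zeta_sq xi eta * kR n ^ 2) by nra. nra. }
    assert (e1 : Rpower (kR n) (- (1 + (1 - 2 * sg))) = / kR n ^ 2 * Rpower (kR n ^ 2) sg).
    { rewrite (rp_pow (kR n) 2) by lra. rewrite Rpower_mult, <- Rpower_Ropp, <- Rpower_plus.
      f_equal. simpl. ring. }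
    rewrite e1. unfold cw, K.
    pose proof (one_coef_sq_le a n ha).
    pose proof (rp_pos (weight nu xi eta n) sg).
    pose proof (rp_pos (kR n ^ 2) sg). pose proof (rp_pos nu sg).
    assert (0 < Kz) by (unfold Kz; nra). pose proof (rp_pos Kz sg).
    replace (/ kR n ^ 2 * Rpower (kR n ^ 2) sg * (8 * a / PI ^ 2 * (Rpower nu sg + Rpower Kz sg)))
      with (8 * a / PI ^ 2 / kR n ^ 2 * ((Rpower nu sg + Rpower Kz sg) * Rpower (kR n ^ 2) sg))
      by (field; split; lra).
    apply Rmult_le_compat; auto. apply pow2_ge_0. lra.
  - apply ex_series_scal_r. apply pseries. lra.
Qed.

Lemma map1_term xi eta l u p0 n : 1 <= zeta_sq xi eta ->
  hterm nu xi eta sg (L0_1 a nu xi eta l u p0) n <=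
  2 * Kd l ^ 2 * hterm nu xi eta (sg + 2) u n + 2 * (IZR xi ^ 2 * Cmod p0 ^ 2) * cw n xi eta.
Proof.
  intros hz. unfold hterm, L0_1, cw.
  pose proof (weight_pos xi eta n) as hw.
  rewrite rp2 by auto.
  pose proof (rp_pos (weight nu xi eta n) sg) as hP.
  set (P := Rpower (weight nu xi eta n) sg) in *.
  set (w := weight nu xi eta n) in *.
  pose proof (Cmod_add_sq (Cmult (symb a nu xi eta l n) (u n)) (Cmult (Cmult Ci (RtoC (IZR xi))) (Cmult p0 (RtoC (one_coef a n))))) as h.
  rewrite !Cmod_mult, Cmod_Ci, !Cmod_R in h.
  pose proof (symb_le_w l xi eta n hz) as hs. fold w in hs.
  pose proof (Cmod_ge_0 (symb a nu xi eta l n)). pose proof (Kd_pos l).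
  assert (h2 : (Cmod (symb a nu xi eta l n) * Cmod (u n)) ^ 2 <= Kd l ^ 2 * w ^ 2 * Cmod (u n) ^ 2).
  { rewrite Rpow_mult_distr. replace (Kd l ^ 2 * w ^ 2) with ((Kd l * w) ^ 2) by ring.
    apply Rmult_le_compat_r. apply pow2_ge_0. apply pow_incr. lra. }
  assert (h3 : (1 * Rabs (IZR xi) * (Cmod p0 * Rabs (one_coef a n))) ^ 2 = IZR xi ^ 2 * Cmod p0 ^ 2 * one_coef a n ^ 2).
  { rewrite <- (pow2_abs (IZR xi)), <- (pow2_abs (one_coef a n)). ring. }
  rewrite h3 in h.
  apply Rle_trans with (P * (2 * (Kd l ^ 2 * w ^ 2 * Cmod (u n) ^ 2) + 2 * (IZR xi ^ 2 * Cmod p0 ^ 2 * one_coef a n ^ 2))).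
  apply Rmult_le_compat_l; lra.
  right. ring.
Qed.

Lemma map2_term xi eta l u p0 n : 1 <= zeta_sq xi eta ->
  hterm nu xi eta sg (L0_2 a nu xi eta l u p0) n <=
  2 * Kd l ^ 2 * hterm nu xi eta (sg + 2) u n + 2 * (IZR eta ^ 2 * Cmod p0 ^ 2) * cw n xi eta.
Proof.
  intros hz. unfold hterm, L0_2, cw.
  pose proof (weight_pos xi eta n) as hw.
  rewrite rp2 by auto.
  pose proof (rp_pos (weight nu xi eta n) sg) as hP.
  set (P := Rpower (weight nu xi eta n) sg) in *.
  set (w := weight nu xi eta n) in *.
  pose proof (Cmod_add_sq (Cmult (symb a nu xi eta l n) (u n)) (Cmult (Cmult Ci (RtoC (IZR eta))) (Cmult p0 (RtoC (one_coef a n))))) as h.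
  rewrite !Cmod_mult, Cmod_Ci, !Cmod_R in h.
  pose proof (symb_le_w l xi eta n hz) as hs. fold w in hs.
  pose proof (Cmod_ge_0 (symb a nu xi eta l n)). pose proof (Kd_pos l).
  assert (h2 : (Cmod (symb a nu xi eta l n) * Cmod (u n)) ^ 2 <= Kd l ^ 2 * w ^ 2 * Cmod (u n) ^ 2).
  { rewrite Rpow_mult_distr. replace (Kd l ^ 2 * w ^ 2) with ((Kd l * w) ^ 2) by ring.
    apply Rmult_le_compat_r. apply pow2_ge_0. apply pow_incr. lra. }
  assert (h3 : (1 * Rabs (IZR eta) * (Cmod p0 * Rabs (one_coef a n))) ^ 2 = IZR eta ^ 2 * Cmod p0 ^ 2 * one_coef a n ^ 2).
  { rewrite <- (pow2_abs (IZR eta)), <- (pow2_abs (one_coef a n)). ring. }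
  rewrite h3 in h.
  apply Rle_trans with (P * (2 * (Kd l ^ 2 * w ^ 2 * Cmod (u n) ^ 2) + 2 * (IZR eta ^ 2 * Cmod p0 ^ 2 * one_coef a n ^ 2))).
  apply Rmult_le_compat_l; lra.
  right. ring.
Qed.


Lemma map3_term xi eta l t n : 1 <= zeta_sq xi eta ->
  hterm nu xi eta sg (L0_3 a nu xi eta l t) n <= Kd l ^ 2 * hterm nu xi eta (sg + 2) t n.
Proof.
  intros hz. unfold hterm, L0_3.
  pose proof (weight_pos xi eta n) as hw.
  rewrite rp2 by auto.
  pose proof (rp_pos (weight nu xi eta n) sg) as hP.
  rewrite Cmod_mult.
  pose proof (symb_le_w l xi eta n hz) as hs.
  pose proof (Cmod_ge_0 (symb a nu xi eta l n)). pose proof (Kd_pos l).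
  assert (h2 : (Cmod (symb a nu xi eta l n) * Cmod (t n)) ^ 2 <= Kd l ^ 2 * weight nu xi eta n ^ 2 * Cmod (t n) ^ 2).
  { rewrite Rpow_mult_distr. replace (Kd l ^ 2 * weight nu xi eta n ^ 2) with ((Kd l * weight nu xi eta n) ^ 2) by ring.
    apply Rmult_le_compat_r. apply pow2_ge_0. apply pow_incr. lra. }
  apply Rle_trans with (Rpower (weight nu xi eta n) sg * (Kd l ^ 2 * weight nu xi eta n ^ 2 * Cmod (t n) ^ 2)).
  apply Rmult_le_compat_l; lra. right; ring.
Qed.

Lemma ser_comb (b h c : nat -> R) al be :
  (forall n, 0 <= b n <= al * h n + be * c n) -> ex_series h -> ex_series c ->
  ex_series b /\ Series b <= al * Series h + be * Series c.
Proof.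
  intros hb hh hc.
  assert (hs : ex_series (fun n => al * h n + be * c n)).
  { apply (ex_series_plus (V := R_NormedModule)).
    apply (ex_series_ext (fun n => h n * al)). intro; apply Rmult_comm. apply ex_series_scal_r; auto.
    apply (ex_series_ext (fun n => c n * be)). intro; apply Rmult_comm. apply ex_series_scal_r; auto. }
  assert (hb1 : forall n, 0 <= b n <= 1 * (al * h n + be * c n)) by (intro n; rewrite Rmult_1_l; apply hb).
  destruct (ser_le_K _ _ 1 hb1 hs) as [h1 h2]. split; auto.
  rewrite Series_plus in h2. rewrite !Series_scal_l in h2. lra.
  apply (ex_series_ext (fun n => h n * al)). intro; apply Rmult_comm. apply ex_series_scal_r; auto.
  apply (ex_series_ext (fun n => c n * be)). intro; apply Rmult_comm. apply ex_series_scal_r; auto.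
Qed.

Definition Scw xi eta := Series (fun n => cw n xi eta).

Lemma map1 xi eta l u p0 : 1 <= zeta_sq xi eta -> inH nu xi eta (sg + 2) u ->
  inH nu xi eta sg (L0_1 a nu xi eta l u p0) /\
  hsq nu xi eta sg (L0_1 a nu xi eta l u p0) <=
    2 * Kd l ^ 2 * hsq nu xi eta (sg + 2) u + 2 * (IZR xi ^ 2 * Cmod p0 ^ 2) * Scw xi eta.
Proof.
  intros hz hu. apply ser_comb; auto. intro n. split. apply hterm_nonneg. apply map1_term; auto.
  apply cw_ex; auto.
Qed.

Lemma map2 xi eta l v p0 : 1 <= zeta_sq xi eta -> inH nu xi eta (sg + 2) v ->
  inH nu xi eta sg (L0_2 a nu xi eta l v p0) /\
  hsq nu xi eta sg (L0_2 a nu xi eta l v p0) <=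
    2 * Kd l ^ 2 * hsq nu xi eta (sg + 2) v + 2 * (IZR eta ^ 2 * Cmod p0 ^ 2) * Scw xi eta.
Proof.
  intros hz hu. apply ser_comb; auto. intro n. split. apply hterm_nonneg. apply map2_term; auto.
  apply cw_ex; auto.
Qed.

Lemma map3 xi eta l t : 1 <= zeta_sq xi eta -> inH nu xi eta (sg + 2) t ->
  inH nu xi eta sg (L0_3 a nu xi eta l t) /\
  hsq nu xi eta sg (L0_3 a nu xi eta l t) <= Kd l ^ 2 * hsq nu xi eta (sg + 2) t.
Proof.
  intros hz hu.
  assert (hb : forall n, 0 <= hterm nu xi eta sg (L0_3 a nu xi eta l t) n <= Kd l ^ 2 * hterm nu xi eta (sg + 2) t n).
  { intro n. split. apply hterm_nonneg. apply map3_term; auto. }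
  destruct (ser_le_K _ _ _ hb hu). split; auto.
Qed.


Lemma u1_eq xi eta l u p0 n : symb a nu xi eta l n <> 0%C ->
  Cminus (u n) (Cdiv (L0_1 a nu xi eta l u p0 n) (symb a nu xi eta l n)) =
  Copp (Cdiv (Cmult (Cmult Ci (RtoC (IZR xi))) (Cmult p0 (RtoC (one_coef a n)))) (symb a nu xi eta l n)).
Proof.
  intros h. unfold L0_1.
  generalize (Cmult (Cmult Ci (RtoC (IZR xi))) (Cmult p0 (RtoC (one_coef a n)))) (u n) h.
  clear. intros X y h. field. exact h.
Qed.

Lemma v1_eq xi eta l v p0 n : symb a nu xi eta l n <> 0%C ->
  Cminus (v n) (Cdiv (L0_2 a nu xi eta l v p0 n) (symb a nu xi eta l n)) =
  Copp (Cdiv (Cmult (Cmult Ci (RtoC (IZR eta))) (Cmult p0 (RtoC (one_coef a n)))) (symb a nu xi eta l n)).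
Proof.
  intros h. unfold L0_2.
  generalize (Cmult (Cmult Ci (RtoC (IZR eta))) (Cmult p0 (RtoC (one_coef a n)))) (v n) h.
  clear. intros X y h. field. exact h.
Qed.

Lemma press_hterm xi eta l (r : R) p0 s n : in_S d1 d2 l -> 1 <= zeta_sq xi eta ->
  Rpower (weight nu xi eta n) s *
    Cmod (Copp (Cdiv (Cmult (Cmult Ci (RtoC r)) (Cmult p0 (RtoC (one_coef a n)))) (symb a nu xi eta l n))) ^ 2
  = r ^ 2 * Cmod p0 ^ 2 * Qterm xi eta l (- s) n.
Proof.
  intros hS hz. pose proof (symb_pos l xi eta n hS hz).
  rewrite Cmod_opp, Cmod_div by (apply symb_nz; auto).
  rewrite !Cmod_mult, Cmod_Ci, !Cmod_R. unfold Qterm. rewrite Ropp_involutive.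
  rewrite <- (pow2_abs r), <- (pow2_abs (one_coef a n)). field. lra.
Qed.

Lemma u2_term xi eta l (f : nat -> C) n : in_S d1 d2 l -> 1 <= zeta_sq xi eta ->
  jomega_sq xi eta l ^ 2 * hterm nu xi eta sg (fun k => Cdiv (f k) (symb a nu xi eta l k)) n
    <= ((1 + 4 / nu) * (4 * (1 + d1))) ^ 2 * hterm nu xi eta sg f n /\
  hterm nu xi eta (sg + 2) (fun k => Cdiv (f k) (symb a nu xi eta l k)) n
    <= ((1 / nu + a ^ 2 / PI ^ 2 + 1) * (4 * (1 + d1))) ^ 2 * hterm nu xi eta sg f n.
Proof.
  intros hS hz. pose proof (symb_pos l xi eta n hS hz) as hM.
  pose proof (symb_lower l xi eta n hS hz). pose proof (w2_le l xi eta n hz).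
  pose proof (weight_le l xi eta n hz). pose proof (weight_pos xi eta n).
  pose proof (w2_pos xi eta l). pose proof PI_RGT_0.
  unfold hterm. rewrite Cmod_div by (apply symb_nz; auto).
  set (M := Cmod (symb a nu xi eta l n)) in *.
  set (D := Df l xi eta n) in *.
  pose proof (rp_pos (weight nu xi eta n) sg).
  set (P := Rpower (weight nu xi eta n) sg) in *.
  assert (0 < 4 / nu) by (apply Rdiv_lt_0_compat; lra).
  assert (0 < 1 / nu) by (apply Rdiv_lt_0_compat; lra).
  assert (0 <= a ^ 2 / PI ^ 2) by (apply Rmult_le_pos; [apply pow2_ge_0 | apply Rlt_le, Rinv_0_lt_compat, pow_lt; lra]).
  split.
  - set (K := (1 + 4 / nu) * (4 * (1 + d1))).
    assert (hw : jomega_sq xi eta l <= K * M).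
    { unfold K. rewrite Rmult_assoc. eapply Rle_trans. exact H0. apply Rmult_le_compat_l; lra. }
    assert (jomega_sq xi eta l ^ 2 <= (K * M) ^ 2) by (apply pow_incr; lra).
    replace (jomega_sq xi eta l ^ 2 * (P * (Cmod (f n) / M) ^ 2)) with
      (P * Cmod (f n) ^ 2 * (jomega_sq xi eta l ^ 2 / M ^ 2)) by (field; lra).
    replace (K ^ 2 * (P * Cmod (f n) ^ 2)) with (P * Cmod (f n) ^ 2 * ((K * M) ^ 2 / M ^ 2)) by (field; lra).
    apply Rmult_le_compat_l. pose proof (pow2_ge_0 (Cmod (f n))). nra.
    apply Rmult_le_compat_r. apply Rlt_le, Rinv_0_lt_compat, pow_lt; lra. auto.
  - set (K := (1 / nu + a ^ 2 / PI ^ 2 + 1) * (4 * (1 + d1))).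
    assert (hw : weight nu xi eta n <= K * M).
    { unfold K. rewrite Rmult_assoc. eapply Rle_trans. exact H1. apply Rmult_le_compat_l; lra. }
    assert (weight nu xi eta n ^ 2 <= (K * M) ^ 2) by (apply pow_incr; lra).
    rewrite rp2 by auto. fold P.
    replace (P * weight nu xi eta n ^ 2 * (Cmod (f n) / M) ^ 2) with
      (P * Cmod (f n) ^ 2 * (weight nu xi eta n ^ 2 / M ^ 2)) by (field; lra).
    replace (K ^ 2 * (P * Cmod (f n) ^ 2)) with (P * Cmod (f n) ^ 2 * ((K * M) ^ 2 / M ^ 2)) by (field; lra).
    apply Rmult_le_compat_l. pose proof (pow2_ge_0 (Cmod (f n))). nra.
    apply Rmult_le_compat_r. apply Rlt_le, Rinv_0_lt_compat, pow_lt; lra. auto.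
Qed.


Definition Kw2 := (1 + 4 / nu) * (4 * (1 + d1)).
Definition K3c := (1 / nu + a ^ 2 / PI ^ 2 + 1) * (4 * (1 + d1)).

Lemma Kw2_pos : 0 < Kw2.
Proof. unfold Kw2. assert (0 < 4 / nu) by (apply Rdiv_lt_0_compat; lra). nra. Qed.
Lemma K3c_pos : 0 < K3c.
Proof.
  unfold K3c. pose proof PI_RGT_0. assert (0 < 1 / nu) by (apply Rdiv_lt_0_compat; lra).
  assert (0 <= a ^ 2 / PI ^ 2) by (apply Rmult_le_pos; [apply pow2_ge_0 | apply Rlt_le, Rinv_0_lt_compat, pow_lt; lra]).
  nra.
Qed.

Lemma div_est xi eta l (f : nat -> C) : in_S d1 d2 l -> 1 <= zeta_sq xi eta -> inH nu xi eta sg f ->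
  inH nu xi eta sg (fun k => Cdiv (f k) (symb a nu xi eta l k)) /\
  inH nu xi eta (sg + 2) (fun k => Cdiv (f k) (symb a nu xi eta l k)) /\
  jomega_sq xi eta l ^ 2 * hsq nu xi eta sg (fun k => Cdiv (f k) (symb a nu xi eta l k))
    <= Kw2 ^ 2 * hsq nu xi eta sg f /\
  hsq nu xi eta (sg + 2) (fun k => Cdiv (f k) (symb a nu xi eta l k)) <= K3c ^ 2 * hsq nu xi eta sg f.
Proof.
  intros hS hz hf.
  pose proof (w2_pos xi eta l) as hw.
  set (g := fun k => Cdiv (f k) (symb a nu xi eta l k)).
  assert (hb1 : forall n, 0 <= hterm nu xi eta sg g n <= (Kw2 ^ 2 / jomega_sq xi eta l ^ 2) * hterm nu xi eta sg f n).
  { intro n. split. apply hterm_nonneg. destruct (u2_term xi eta l f n hS hz) as [h _].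
    fold g in h. unfold Kw2.
    apply (Rmult_le_reg_l (jomega_sq xi eta l ^ 2)). apply pow_lt; lra.
    replace (jomega_sq xi eta l ^ 2 * (((1 + 4 / nu) * (4 * (1 + d1))) ^ 2 / jomega_sq xi eta l ^ 2 * hterm nu xi eta sg f n))
      with (((1 + 4 / nu) * (4 * (1 + d1))) ^ 2 * hterm nu xi eta sg f n) by (field; lra).
    exact h. }
  assert (hb2 : forall n, 0 <= hterm nu xi eta (sg + 2) g n <= K3c ^ 2 * hterm nu xi eta sg f n).
  { intro n. split. apply hterm_nonneg. destruct (u2_term xi eta l f n hS hz) as [_ h]. exact h. }
  destruct (ser_le_K _ _ _ hb1 hf) as [e1 s1].
  destruct (ser_le_K _ _ _ hb2 hf) as [e2 s2].
  split; auto. split; auto. split; auto.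
  unfold hsq. apply (Rmult_le_compat_l (jomega_sq xi eta l ^ 2)) in s1; [|apply pow2_ge_0].
  replace (jomega_sq xi eta l ^ 2 * (Kw2 ^ 2 / jomega_sq xi eta l ^ 2 * Series (hterm nu xi eta sg f)))
    with (Kw2 ^ 2 * Series (hterm nu xi eta sg f)) in s1 by (field; lra).
  exact s1.
Qed.

Lemma press_est xi eta l (r : R) p0 s : in_S d1 d2 l -> 1 <= zeta_sq xi eta -> -5/2 < - s ->
  inH nu xi eta s (fun n => Copp (Cdiv (Cmult (Cmult Ci (RtoC r)) (Cmult p0 (RtoC (one_coef a n)))) (symb a nu xi eta l n))) /\
  hsq nu xi eta s (fun n => Copp (Cdiv (Cmult (Cmult Ci (RtoC r)) (Cmult p0 (RtoC (one_coef a n)))) (symb a nu xi eta l n)))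
    = r ^ 2 * Cmod p0 ^ 2 * Series (Qterm xi eta l (- s)).
Proof.
  intros hS hz hs.
  destruct (Qser xi eta l (- s) hS hz hs) as [hQ _].
  assert (e : forall n, hterm nu xi eta s (fun n => Copp (Cdiv (Cmult (Cmult Ci (RtoC r)) (Cmult p0 (RtoC (one_coef a n)))) (symb a nu xi eta l n))) n
     = Qterm xi eta l (- s) n * (r ^ 2 * Cmod p0 ^ 2)).
  { intro n. unfold hterm. rewrite press_hterm by auto. ring. }
  split.
  - unfold inH. apply (ex_series_ext (fun n => Qterm xi eta l (- s) n * (r ^ 2 * Cmod p0 ^ 2))).
    intro n. symmetry. apply e. apply ex_series_scal_r. auto.
  - unfold hsq. rewrite (Series_ext _ _ e). rewrite Series_scal_r. ring.
Qed.


Lemma L0_1_sub xi eta l u u' p0 p0' :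
  seq_sub (L0_1 a nu xi eta l u p0) (L0_1 a nu xi eta l u' p0') = L0_1 a nu xi eta l (seq_sub u u') (Cminus p0 p0').
Proof. apply functional_extensionality. intro n. unfold seq_sub, L0_1. ring. Qed.
Lemma L0_2_sub xi eta l u u' p0 p0' :
  seq_sub (L0_2 a nu xi eta l u p0) (L0_2 a nu xi eta l u' p0') = L0_2 a nu xi eta l (seq_sub u u') (Cminus p0 p0').
Proof. apply functional_extensionality. intro n. unfold seq_sub, L0_2. ring. Qed.
Lemma L0_3_sub xi eta l u u' :
  seq_sub (L0_3 a nu xi eta l u) (L0_3 a nu xi eta l u') = L0_3 a nu xi eta l (seq_sub u u').
Proof. apply functional_extensionality. intro n. unfold seq_sub, L0_3. ring. Qed.

Lemma Scw_nonneg xi eta : 1 <= zeta_sq xi eta -> 0 <= Scw xi eta.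
Proof. intros hz. apply Series_nonneg. intro; apply cw_nonneg. apply cw_ex; auto. Qed.

Lemma cont_bound xi eta l u v t q : 1 <= zeta_sq xi eta ->
  inH nu xi eta (sg + 2) u -> inH nu xi eta (sg + 2) v -> inH nu xi eta (sg + 2) t ->
  hnorm3 nu xi eta sg (L0_1 a nu xi eta l u q) (L0_2 a nu xi eta l v q) (L0_3 a nu xi eta l t)
  <= sqrt (2 * Kd l ^ 2 + 2 * zeta_sq xi eta * Scw xi eta) * dom_norm nu xi eta sg u v q t.
Proof.
  intros hz hu hv ht.
  destruct (map1 xi eta l u q hz hu) as [_ h1].
  destruct (map2 xi eta l v q hz hv) as [_ h2].
  destruct (map3 xi eta l t hz ht) as [_ h3].
  pose proof (hsq_nonneg _ _ _ _ hu). pose proof (hsq_nonneg _ _ _ _ hv). pose proof (hsq_nonneg _ _ _ _ ht).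
  pose proof (Scw_nonneg xi eta hz). pose proof (Kd_pos l).
  pose proof (pow2_ge_0 (Cmod q)).
  unfold hnorm3, dom_norm. rewrite <- sqrt_mult.
  2:{ assert (0 <= zeta_sq xi eta * Scw xi eta) by nra. nra. }
  2:{ lra. }
  apply sqrt_le_1_alt.
  unfold zeta_sq in *.
  set (K := Kd l) in *. set (S0 := Scw xi eta) in *.
  set (X := IZR xi ^ 2) in *. set (E := IZR eta ^ 2) in *.
  assert (0 <= X) by apply pow2_ge_0. assert (0 <= E) by apply pow2_ge_0.
  set (A := hsq nu xi eta (sg + 2) u) in *. set (B := hsq nu xi eta (sg + 2) v) in *.
  set (T := hsq nu xi eta (sg + 2) t) in *. set (Q := Cmod q ^ 2) in *.
  assert (0 <= K ^ 2) by apply pow2_ge_0.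
  assert (h4 : 2 * (X * Q) * S0 + 2 * (E * Q) * S0 <= 2 * (X + E) * S0 * Q) by (right; ring).
  assert (0 <= (X + E) * S0 * A) by (apply Rmult_le_pos; [apply Rmult_le_pos|]; lra).
  assert (0 <= (X + E) * S0 * B) by (apply Rmult_le_pos; [apply Rmult_le_pos|]; lra).
  assert (0 <= (X + E) * S0 * T) by (apply Rmult_le_pos; [apply Rmult_le_pos|]; lra).
  assert (0 <= K ^ 2 * Q) by nra. assert (0 <= K^2 * T) by nra.
  nra.
Qed.


Lemma est_p0 xi eta l u v t p0 : in_S d1 d2 l -> 1 <= zeta_sq xi eta ->
  in_dom a nu xi eta sg u v t ->
  zeta_abs xi eta * Cmod p0 <=
   sqrt (KQ sg) / cS * jomega_sq xi eta l * Ms xi eta l sg *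
   hnorm2 nu xi eta sg (L0_1 a nu xi eta l u p0) (L0_2 a nu xi eta l v p0).
Proof.
  intros hS hz hd.
  pose proof hd as [hu [hv [_ ht]]].
  set (f1 := L0_1 a nu xi eta l u p0). set (f2 := L0_2 a nu xi eta l v p0).
  destruct (map1 xi eta l u p0 hz hu) as [hf1 _].
  destruct (map2 xi eta l v p0 hz hv) as [hf2 _].
  fold f1 in hf1. fold f2 in hf2.
  destruct (tterm_series xi eta l f1 f2 hS hz hf1 hf2) as [hex hTb].
  destruct (C_series_ex _ hex) as [T hT].
  destruct (C_series_ex _ (sterm_ex xi eta l hS hz)) as [Sv hSv].
  pose proof (p0_rel xi eta l u v t p0 T Sv hS hz hd hT hSv) as e.
  pose proof (Cmod_series_le _ _ hT hex) as hCT.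
  assert (hzs : 0 <= zeta_sq xi eta) by lra.
  assert (eT : Cmod T = Cmod p0 * zeta_sq xi eta * Cmod Sv).
  { rewrite e. rewrite !Cmod_mult, Cmod_Ci, Cmod_R, Rabs_right by lra. ring. }
  destruct (Qser xi eta l sg hS hz ltac:(lra)) as [hQe hQ].
  pose proof (S_lower xi eta l Sv hS hz hSv) as hSl.
  pose proof cS_pos as hcS.
  pose proof (hsq_nonneg _ _ _ _ hf1). pose proof (hsq_nonneg _ _ _ _ hf2).
  set (HF := hsq nu xi eta sg f1 + hsq nu xi eta sg f2) in *.
  assert (hHF : 0 <= HF) by (unfold HF; lra).
  set (Q := Series (Qterm xi eta l sg)) in *.
  assert (hQ0 : 0 <= Q) by (apply Series_nonneg; [intro; apply Qterm_nonneg; auto | auto]).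
  pose proof (Ms_pos xi eta l sg ltac:(lra)) as hMs.
  pose proof (KQ_pos sg) as hKQ.
  set (r := zeta_abs xi eta).
  assert (hr : r * r = zeta_sq xi eta) by (unfold r, zeta_abs; apply sqrt_sqrt; lra).
  assert (hr1 : 1 <= r) by (unfold r, zeta_abs; rewrite <- sqrt_1; apply sqrt_le_1_alt; lra).
  assert (h1 : sqrt (Q * (zeta_sq xi eta * HF)) <= sqrt (KQ sg) * Ms xi eta l sg * (r * sqrt HF)).
  { apply Rle_trans with (sqrt (KQ sg * Ms xi eta l sg ^ 2 * (zeta_sq xi eta * HF))).
    apply sqrt_le_1_alt. apply Rmult_le_compat_r. nra. auto.
    rewrite !sqrt_mult; try nra. rewrite sqrt_pow2 by lra. unfold r, zeta_abs. lra.
    }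
  assert (h2 : Cmod p0 * r * Cmod Sv <= sqrt (KQ sg) * Ms xi eta l sg * sqrt HF).
  { apply (Rmult_le_reg_l r). lra.
    replace (r * (Cmod p0 * r * Cmod Sv)) with (Cmod p0 * zeta_sq xi eta * Cmod Sv) by (rewrite <- hr; ring).
    rewrite <- eT. lra. }
  unfold hnorm2. fold f1 f2. fold HF.
  pose proof (Cmod_ge_0 p0). pose proof (Cmod_ge_0 Sv).
  pose proof (sqrt_pos HF). pose proof (sqrt_pos (KQ sg)). pose proof (w2_pos xi eta l).
  apply (Rmult_le_reg_r cS). auto.
  replace (sqrt (KQ sg) / cS * jomega_sq xi eta l * Ms xi eta l sg * sqrt HF * cS)
    with (sqrt (KQ sg) * Ms xi eta l sg * sqrt HF * jomega_sq xi eta l) by (field; lra).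
  apply Rle_trans with (r * Cmod p0 * (Cmod Sv * jomega_sq xi eta l)).
  apply Rmult_le_compat_l. nra. auto.
  replace (r * Cmod p0 * (Cmod Sv * jomega_sq xi eta l)) with ((Cmod p0 * r * Cmod Sv) * jomega_sq xi eta l) by ring.
  apply Rmult_le_compat_r. lra. auto.
Qed.


Lemma sqrt_le_K X Y K : 0 <= X -> 0 <= Y -> 0 <= K -> X <= K ^ 2 * Y -> sqrt X <= K * sqrt Y.
Proof.
  intros hX hY hK h. rewrite <- (sqrt_pow2 K) by auto. rewrite <- sqrt_mult by (auto; apply pow2_ge_0).
  apply sqrt_le_1_alt. auto.
Qed.

Definition Ca := sqrt (KQ sg) / cS.
Definition Cb := Ca * (sqrt (KQ (- sg)) + sqrt (KQ (- sg - 2))).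

Lemma Ca_pos : 0 <= Ca.
Proof. unfold Ca. apply Rmult_le_pos. apply sqrt_pos. apply Rlt_le, Rinv_0_lt_compat, cS_pos. Qed.
Lemma Cb_pos : 0 <= Cb.
Proof. unfold Cb. apply Rmult_le_pos. apply Ca_pos. pose proof (sqrt_pos (KQ (-sg))). pose proof (sqrt_pos (KQ (-sg-2))). lra. Qed.

Lemma press_norm xi eta l p0 s : in_S d1 d2 l -> 1 <= zeta_sq xi eta -> -5/2 < - s ->
  let g1 := fun n => Copp (Cdiv (Cmult (Cmult Ci (RtoC (IZR xi))) (Cmult p0 (RtoC (one_coef a n)))) (symb a nu xi eta l n)) in
  let g2 := fun n => Copp (Cdiv (Cmult (Cmult Ci (RtoC (IZR eta))) (Cmult p0 (RtoC (one_coef a n)))) (symb a nu xi eta l n)) in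
  inH nu xi eta s g1 /\ inH nu xi eta s g2 /\
  hnorm2 nu xi eta s g1 g2 <= zeta_abs xi eta * Cmod p0 * (sqrt (KQ (- s)) * Ms xi eta l (- s)).
Proof.
  intros hS hz hs g1 g2.
  destruct (press_est xi eta l (IZR xi) p0 s hS hz hs) as [h1 e1].
  destruct (press_est xi eta l (IZR eta) p0 s hS hz hs) as [h2 e2].
  split; auto. split; auto.
  unfold hnorm2. fold g1 g2 in e1, e2. rewrite e1, e2.
  destruct (Qser xi eta l (- s) hS hz hs) as [hQe hQ].
  assert (hQ0 : 0 <= Series (Qterm xi eta l (- s))) by (apply Series_nonneg; [intro; apply Qterm_nonneg; auto | auto]).
  pose proof (KQ_pos (- s)). pose proof (Ms_pos xi eta l (- s) hs).
  pose proof (Cmod_ge_0 p0).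
  replace (IZR xi ^ 2 * Cmod p0 ^ 2 * Series (Qterm xi eta l (- s)) +
           IZR eta ^ 2 * Cmod p0 ^ 2 * Series (Qterm xi eta l (- s)))
    with (zeta_sq xi eta * Cmod p0 ^ 2 * Series (Qterm xi eta l (- s))) by (unfold zeta_sq; ring).
  assert (hzq : zeta_sq xi eta = zeta_abs xi eta ^ 2).
  { unfold zeta_abs. rewrite pow2_sqrt; lra. }
  pose proof (sqrt_pos (zeta_sq xi eta)). fold (zeta_abs xi eta) in H2.
  pose proof (sqrt_pos (KQ (- s))).
  rewrite <- (sqrt_pow2 (zeta_abs xi eta * Cmod p0 * (sqrt (KQ (- s)) * Ms xi eta l (- s)))).
  2:{ apply Rmult_le_pos; apply Rmult_le_pos; lra. }
  apply sqrt_le_1_alt.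
  rewrite hzq.
  assert (Series (Qterm xi eta l (- s)) <= sqrt (KQ (- s)) ^ 2 * Ms xi eta l (- s) ^ 2).
  { rewrite pow2_sqrt by lra. auto. }
  assert (0 <= zeta_abs xi eta ^ 2 * Cmod p0 ^ 2) by (apply Rmult_le_pos; apply pow2_ge_0).
  apply Rle_trans with (zeta_abs xi eta ^ 2 * Cmod p0 ^ 2 * (sqrt (KQ (- s)) ^ 2 * Ms xi eta l (- s) ^ 2)).
  apply Rmult_le_compat_l; auto. right. ring.
Qed.


Lemma est_bc xi eta l u v t p0 : in_S d1 d2 l -> 1 <= zeta_sq xi eta ->
  in_dom a nu xi eta sg u v t ->
  let f1 := L0_1 a nu xi eta l u p0 in
  let f2 := L0_2 a nu xi eta l v p0 in
  let nF := hnorm2 nu xi eta sg f1 f2 in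
  let w2 := jomega_sq xi eta l in
  exists u1 v1 u2 v2 : nat -> C,
    inH nu xi eta (sg + 2) u1 /\ inH nu xi eta (sg + 2) v1 /\
    inH nu xi eta (sg + 2) u2 /\ inH nu xi eta (sg + 2) v2 /\
    u = seq_add u1 u2 /\ v = seq_add v1 v2 /\
    Ms xi eta l (- sg - 2) / Ms xi eta l (- sg) * hnorm2 nu xi eta sg u1 v1
      + hnorm2 nu xi eta (sg + 2) u1 v1
      <= Cb * w2 * Ms xi eta l sg * Ms xi eta l (- sg - 2) * nF /\
    w2 * hnorm2 nu xi eta sg u2 v2 + hnorm2 nu xi eta (sg + 2) u2 v2 <= (Kw2 + K3c) * nF.
Proof.
  intros hS hz hd f1 f2 nF w2.
  pose proof hd as [hu [hv [_ ht]]].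
  destruct (map1 xi eta l u p0 hz hu) as [hf1 _].
  destruct (map2 xi eta l v p0 hz hv) as [hf2 _].
  fold f1 in hf1. fold f2 in hf2.
  set (u2 := fun k => Cdiv (f1 k) (symb a nu xi eta l k)).
  set (v2 := fun k => Cdiv (f2 k) (symb a nu xi eta l k)).
  set (g1 := fun n => Copp (Cdiv (Cmult (Cmult Ci (RtoC (IZR xi))) (Cmult p0 (RtoC (one_coef a n)))) (symb a nu xi eta l n))).
  set (g2 := fun n => Copp (Cdiv (Cmult (Cmult Ci (RtoC (IZR eta))) (Cmult p0 (RtoC (one_coef a n)))) (symb a nu xi eta l n))).
  assert (eu1 : seq_sub u u2 = g1).
  { apply functional_extensionality. intro n. unfold seq_sub, u2, g1, f1. apply u1_eq. apply symb_nz; auto. }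
  assert (ev1 : seq_sub v v2 = g2).
  { apply functional_extensionality. intro n. unfold seq_sub, v2, g2, f2. apply v1_eq. apply symb_nz; auto. }
  destruct (div_est xi eta l f1 hS hz hf1) as [hu2a [hu2b [hu2c hu2d]]].
  destruct (div_est xi eta l f2 hS hz hf2) as [hv2a [hv2b [hv2c hv2d]]].
  fold u2 in hu2a, hu2b, hu2c, hu2d. fold v2 in hv2a, hv2b, hv2c, hv2d.
  destruct (press_norm xi eta l p0 sg hS hz ltac:(lra)) as [hg1a [hg2a hga]].
  destruct (press_norm xi eta l p0 (sg + 2) hS hz ltac:(lra)) as [hg1b [hg2b hgb]].
  fold g1 g2 in hga, hg1a, hg2a, hgb, hg1b, hg2b.
  replace (- (sg + 2)) with (- sg - 2) in hgb by ring.
  exists g1, g2, u2, v2.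
  split; auto. split; auto. split; auto. split; auto.
  split. { rewrite <- eu1. apply functional_extensionality. intro n. unfold seq_add, seq_sub. ring. }
  split. { rewrite <- ev1. apply functional_extensionality. intro n. unfold seq_add, seq_sub. ring. }
  pose proof (est_p0 xi eta l u v t p0 hS hz hd) as hp. fold f1 f2 nF w2 in hp.
  pose proof (Ms_pos xi eta l (- sg) ltac:(lra)) as hM1.
  pose proof (Ms_pos xi eta l (- sg - 2) ltac:(lra)) as hM2.
  pose proof (Ms_pos xi eta l sg ltac:(lra)) as hM0.
  pose proof (w2_pos xi eta l) as hw. fold w2 in hw.
  pose proof (hsq_nonneg _ _ _ _ hf1). pose proof (hsq_nonneg _ _ _ _ hf2).
  assert (hnF : 0 <= nF) by apply sqrt_pos.
  split.
  - set (R0 := zeta_abs xi eta * Cmod p0) in *.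
    assert (hR0 : 0 <= R0) by (unfold R0, zeta_abs; apply Rmult_le_pos; [apply sqrt_pos | apply Cmod_ge_0]).
    pose proof (sqrt_pos (KQ (- sg))). pose proof (sqrt_pos (KQ (- sg - 2))).
    assert (h1 : Ms xi eta l (- sg - 2) / Ms xi eta l (- sg) * hnorm2 nu xi eta sg g1 g2
       <= R0 * sqrt (KQ (- sg)) * Ms xi eta l (- sg - 2)).
    { apply Rle_trans with (Ms xi eta l (- sg - 2) / Ms xi eta l (- sg) * (R0 * (sqrt (KQ (- sg)) * Ms xi eta l (- sg)))).
      apply Rmult_le_compat_l. apply Rlt_le, Rdiv_lt_0_compat; lra. auto.
      right. field. lra. }
    assert (h2 : R0 * (sqrt (KQ (- sg)) + sqrt (KQ (- sg - 2))) * Ms xi eta l (- sg - 2)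
      <= Cb * w2 * Ms xi eta l sg * Ms xi eta l (- sg - 2) * nF).
    { unfold Cb. fold Ca in hp.
      replace (Ca * (sqrt (KQ (- sg)) + sqrt (KQ (- sg - 2))) * w2 * Ms xi eta l sg * Ms xi eta l (- sg - 2) * nF)
        with ((Ca * w2 * Ms xi eta l sg * nF) * (sqrt (KQ (- sg)) + sqrt (KQ (- sg - 2))) * Ms xi eta l (- sg - 2)) by ring.
      apply Rmult_le_compat_r. lra. apply Rmult_le_compat_r. lra. auto. }
    nra.
  - assert (h1 : w2 * hnorm2 nu xi eta sg u2 v2 <= Kw2 * nF).
    { unfold hnorm2, nF, hnorm2. pose proof (hsq_nonneg _ _ _ _ hu2a). pose proof (hsq_nonneg _ _ _ _ hv2a).
      rewrite <- (sqrt_pow2 w2) at 1 by lra. rewrite <- sqrt_mult by (try apply pow2_ge_0; lra).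
      apply sqrt_le_K. apply Rmult_le_pos. apply pow2_ge_0. lra. lra. apply Rlt_le, Kw2_pos. rewrite !Rmult_plus_distr_l. fold w2 in hu2c, hv2c. lra. }
    assert (h2 : hnorm2 nu xi eta (sg + 2) u2 v2 <= K3c * nF).
    { unfold hnorm2, nF, hnorm2. pose proof (hsq_nonneg _ _ _ _ hu2b). pose proof (hsq_nonneg _ _ _ _ hv2b).
      apply sqrt_le_K. lra. lra. apply Rlt_le, K3c_pos. lra. }
    lra.
Qed.


Lemma est_d xi eta l t : in_S d1 d2 l -> 1 <= zeta_sq xi eta -> inH nu xi eta (sg + 2) t ->
  jomega_sq xi eta l * hnorm nu xi eta sg t + hnorm nu xi eta (sg + 2) t
    <= (Kw2 + K3c) * hnorm nu xi eta sg (L0_3 a nu xi eta l t).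
Proof.
  intros hS hz ht.
  destruct (map3 xi eta l t hz ht) as [hf3 _].
  set (f3 := L0_3 a nu xi eta l t) in *.
  assert (et : t = fun k => Cdiv (f3 k) (symb a nu xi eta l k)).
  { apply functional_extensionality. intro n. unfold f3, L0_3.
    pose proof (symb_nz l xi eta n hS hz). field. auto. }
  destruct (div_est xi eta l f3 hS hz hf3) as [hA [hB [hC hD]]].
  rewrite <- et in hA, hB, hC, hD.
  pose proof (hsq_nonneg _ _ _ _ hf3). pose proof (hsq_nonneg _ _ _ _ hA). pose proof (hsq_nonneg _ _ _ _ hB).
  pose proof (w2_pos xi eta l).
  unfold hnorm.
  assert (h1 : jomega_sq xi eta l * sqrt (hsq nu xi eta sg t) <= Kw2 * sqrt (hsq nu xi eta sg f3)).
  { rewrite <- (sqrt_pow2 (jomega_sq xi eta l)) at 1 by lra. rewrite <- sqrt_mult by (try apply pow2_ge_0; lra).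
    apply sqrt_le_K. apply Rmult_le_pos. apply pow2_ge_0. lra. lra. apply Rlt_le, Kw2_pos. lra. }
  assert (h2 : sqrt (hsq nu xi eta (sg + 2) t) <= K3c * sqrt (hsq nu xi eta sg f3)).
  { apply sqrt_le_K. lra. lra. apply Rlt_le, K3c_pos. lra. }
  lra.
Qed.

Lemma Sv_nz xi eta l (Sv : C) : in_S d1 d2 l -> 1 <= zeta_sq xi eta ->
  is_series (sterm xi eta l) Sv -> Sv <> 0%C.
Proof.
  intros hS hz h e. pose proof (S_lower xi eta l Sv hS hz h). rewrite e, Cmod_0 in H.
  pose proof cS_pos. lra.
Qed.

Lemma inj xi eta l u v p0 t u' v' p0' t' : in_S d1 d2 l -> 1 <= zeta_sq xi eta ->
  in_dom a nu xi eta sg u v t -> in_dom a nu xi eta sg u' v' t' ->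
  L0_1 a nu xi eta l u p0 = L0_1 a nu xi eta l u' p0' ->
  L0_2 a nu xi eta l v p0 = L0_2 a nu xi eta l v' p0' ->
  L0_3 a nu xi eta l t = L0_3 a nu xi eta l t' ->
  u = u' /\ v = v' /\ p0 = p0' /\ t = t'.
Proof.
  intros hS hz hd hd' e1 e2 e3.
  pose proof hd as [hu [hv [_ ht]]].
  destruct (map1 xi eta l u p0 hz hu) as [hf1 _].
  destruct (map2 xi eta l v p0 hz hv) as [hf2 _].
  destruct (tterm_series xi eta l _ _ hS hz hf1 hf2) as [hex _].
  destruct (C_series_ex _ hex) as [T hT].
  destruct (C_series_ex _ (sterm_ex xi eta l hS hz)) as [Sv hSv].
  pose proof (p0_rel xi eta l u v t p0 T Sv hS hz hd hT hSv) as r1.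
  rewrite e1, e2 in hT.
  pose proof (p0_rel xi eta l u' v' t' p0' T Sv hS hz hd' hT hSv) as r2.
  assert (hp : p0 = p0').
  { pose proof (Sv_nz xi eta l Sv hS hz hSv) as hSn.
    assert (hzn : RtoC (zeta_sq xi eta) <> 0%C).
    { intro h. apply (f_equal fst) in h. simpl in h. lra. }
    rewrite r1 in r2.
    assert (hne : Cmult Ci (Cmult (RtoC (zeta_sq xi eta)) Sv) <> 0%C).
    { apply Cmult_neq_0. apply Ci_nz. apply Cmult_neq_0; auto. }
    apply (f_equal (fun z => Cdiv z (Cmult Ci (Cmult (RtoC (zeta_sq xi eta)) Sv)))) in r2.
    replace (Cdiv (Cmult (Cmult Ci (Cmult p0 (RtoC (zeta_sq xi eta)))) Sv) (Cmult Ci (Cmult (RtoC (zeta_sq xi eta)) Sv))) with p0 in r2 by (field; repeat split; try apply Ci_nz; auto).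
    replace (Cdiv (Cmult (Cmult Ci (Cmult p0' (RtoC (zeta_sq xi eta)))) Sv) (Cmult Ci (Cmult (RtoC (zeta_sq xi eta)) Sv))) with p0' in r2 by (field; repeat split; try apply Ci_nz; auto).
    exact r2. }
  subst p0'.
  split; [|split; [|split]]; auto; apply functional_extensionality; intro n;
    pose proof (symb_nz l xi eta n hS hz) as hn.
  - apply (f_equal (fun f => f n)) in e1. unfold L0_1 in e1.
    apply (f_equal (fun z => Cdiv (Cminus z (Cmult (Cmult Ci (RtoC (IZR xi))) (Cmult p0 (RtoC (one_coef a n))))) (symb a nu xi eta l n))) in e1.
    replace (u n) with (Cdiv (Cminus (Cplus (Cmult (symb a nu xi eta l n) (u n)) (Cmult (Cmult Ci (RtoC (IZR xi))) (Cmult p0 (RtoC (one_coef a n))))) (Cmult (Cmult Ci (RtoC (IZR xi))) (Cmult p0 (RtoC (one_coef a n))))) (symb a nu xi eta l n)) by (field; auto).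
    rewrite e1. field. auto.
  - apply (f_equal (fun f => f n)) in e2. unfold L0_2 in e2.
    apply (f_equal (fun z => Cdiv (Cminus z (Cmult (Cmult Ci (RtoC (IZR eta))) (Cmult p0 (RtoC (one_coef a n))))) (symb a nu xi eta l n))) in e2.
    replace (v n) with (Cdiv (Cminus (Cplus (Cmult (symb a nu xi eta l n) (v n)) (Cmult (Cmult Ci (RtoC (IZR eta))) (Cmult p0 (RtoC (one_coef a n))))) (Cmult (Cmult Ci (RtoC (IZR eta))) (Cmult p0 (RtoC (one_coef a n))))) (symb a nu xi eta l n)) by (field; auto).
    rewrite e2. field. auto.
  - apply (f_equal (fun f => f n)) in e3. unfold L0_3 in e3.
    apply (f_equal (fun z => Cdiv z (symb a nu xi eta l n))) in e3.
    replace (t n) with (Cdiv (Cmult (symb a nu xi eta l n) (t n)) (symb a nu xi eta l n)) by (field; auto).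
    rewrite e3. field. auto.
Qed.


Lemma surj xi eta l f1 f2 f3 : in_S d1 d2 l -> 1 <= zeta_sq xi eta ->
  inH nu xi eta sg f1 -> inH nu xi eta sg f2 -> inH nu xi eta sg f3 ->
  exists u v p0 t, in_dom a nu xi eta sg u v t /\
    L0_1 a nu xi eta l u p0 = f1 /\ L0_2 a nu xi eta l v p0 = f2 /\ L0_3 a nu xi eta l t = f3.
Proof.
  intros hS hz hf1 hf2 hf3.
  destruct (tterm_series xi eta l _ _ hS hz hf1 hf2) as [hex _].
  destruct (C_series_ex _ hex) as [T hT].
  destruct (C_series_ex _ (sterm_ex xi eta l hS hz)) as [Sv hSv].
  pose proof (Sv_nz xi eta l Sv hS hz hSv) as hSn.
  assert (hzn : RtoC (zeta_sq xi eta) <> 0%C).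
  { intro h. apply (f_equal fst) in h. simpl in h. lra. }
  set (p0 := Cdiv T (Cmult Ci (Cmult (RtoC (zeta_sq xi eta)) Sv))).
  set (u := fun n => Cdiv (Cminus (f1 n) (Cmult (Cmult Ci (RtoC (IZR xi))) (Cmult p0 (RtoC (one_coef a n))))) (symb a nu xi eta l n)).
  set (v := fun n => Cdiv (Cminus (f2 n) (Cmult (Cmult Ci (RtoC (IZR eta))) (Cmult p0 (RtoC (one_coef a n))))) (symb a nu xi eta l n)).
  set (t := fun n => Cdiv (f3 n) (symb a nu xi eta l n)).
  assert (e1 : L0_1 a nu xi eta l u p0 = f1).
  { apply functional_extensionality. intro n. unfold L0_1, u.
    pose proof (symb_nz l xi eta n hS hz). field. auto. }
  assert (e2 : L0_2 a nu xi eta l v p0 = f2).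
  { apply functional_extensionality. intro n. unfold L0_2, v.
    pose proof (symb_nz l xi eta n hS hz). field. auto. }
  assert (e3 : L0_3 a nu xi eta l t = f3).
  { apply functional_extensionality. intro n. unfold L0_3, t.
    pose proof (symb_nz l xi eta n hS hz). field. auto. }
  exists u, v, p0, t. split; [|split; [|split]]; auto.
  destruct (div_est xi eta l f1 hS hz hf1) as [_ [hu2 _]].
  destruct (div_est xi eta l f2 hS hz hf2) as [_ [hv2 _]].
  destruct (div_est xi eta l f3 hS hz hf3) as [_ [ht2 _]].
  destruct (press_norm xi eta l p0 (sg + 2) hS hz ltac:(lra)) as [hg1 [hg2 _]].
  split; [|split; [|split]].
  - replace u with (seq_add (fun k => Cdiv (f1 k) (symb a nu xi eta l k))
       (fun n => Copp (Cdiv (Cmult (Cmult Ci (RtoC (IZR xi))) (Cmult p0 (RtoC (one_coef a n)))) (symb a nu xi eta l n)))).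
    apply inH_add; auto.
    apply functional_extensionality. intro n. unfold seq_add, u.
    pose proof (symb_nz l xi eta n hS hz). field. auto.
  - replace v with (seq_add (fun k => Cdiv (f2 k) (symb a nu xi eta l k))
       (fun n => Copp (Cdiv (Cmult (Cmult Ci (RtoC (IZR eta))) (Cmult p0 (RtoC (one_coef a n)))) (symb a nu xi eta l n)))).
    apply inH_add; auto.
    apply functional_extensionality. intro n. unfold seq_add, v.
    pose proof (symb_nz l xi eta n hS hz). field. auto.
  - unfold div_free.
    set (K := Cmult Ci (Cmult p0 (RtoC (zeta_sq xi eta)))).
    pose proof (series_C_minus _ _ _ _ hT (C_series_scal K _ _ hSv)) as h1.
    assert (hK : Cminus T (Cmult K Sv) = RtoC 0).
    { unfold K, p0. field. repeat split; try apply Ci_nz; auto. }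
    rewrite hK in h1.
    apply (is_series_ext (fun n => Cminus (tterm xi eta l f1 f2 n) (Cmult K (sterm xi eta l n)))); [|exact h1].
    intro n. rewrite <- e1, <- e2. unfold K. rewrite (div_rel xi eta l u v p0 n) by (apply symb_nz; auto). reflexivity.
  - exact ht2.
Qed.


Lemma Cst_ge : 0 <= Ca /\ 0 <= Cb /\ 0 < Kw2 /\ 0 < K3c.
Proof. split. apply Ca_pos. split. apply Cb_pos. split. apply Kw2_pos. apply K3c_pos. Qed.

Lemma main_ex :
  exists Cst : R,
  forall (l : C) (xi eta : Z),
    in_S d1 d2 l -> (xi, eta) <> (0%Z, 0%Z) ->
    (forall u v p0 t, in_dom a nu xi eta sg u v t ->
       inH nu xi eta sg (L0_1 a nu xi eta l u p0)
       /\ inH nu xi eta sg (L0_2 a nu xi eta l v p0)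
       /\ inH nu xi eta sg (L0_3 a nu xi eta l t)) /\
    (forall u v p0 t, in_dom a nu xi eta sg u v t ->
       forall eps, 0 < eps -> exists del, 0 < del /\
       forall u' v' p0' t', in_dom a nu xi eta sg u' v' t' ->
         dom_norm nu xi eta sg (seq_sub u u') (seq_sub v v') (Cminus p0 p0') (seq_sub t t') < del ->
         hnorm3 nu xi eta sg
           (seq_sub (L0_1 a nu xi eta l u p0) (L0_1 a nu xi eta l u' p0'))
           (seq_sub (L0_2 a nu xi eta l v p0) (L0_2 a nu xi eta l v' p0'))
           (seq_sub (L0_3 a nu xi eta l t) (L0_3 a nu xi eta l t')) < eps) /\
    (forall u v p0 t u' v' p0' t',
       in_dom a nu xi eta sg u v t -> in_dom a nu xi eta sg u' v' t' ->
       L0_1 a nu xi eta l u p0 = L0_1 a nu xi eta l u' p0' ->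
       L0_2 a nu xi eta l v p0 = L0_2 a nu xi eta l v' p0' ->
       L0_3 a nu xi eta l t = L0_3 a nu xi eta l t' ->
       u = u' /\ v = v' /\ p0 = p0' /\ t = t') /\
    (forall f1 f2 f3, inH nu xi eta sg f1 -> inH nu xi eta sg f2 -> inH nu xi eta sg f3 ->
       exists u v p0 t, in_dom a nu xi eta sg u v t /\
         L0_1 a nu xi eta l u p0 = f1 /\ L0_2 a nu xi eta l v p0 = f2 /\
         L0_3 a nu xi eta l t = f3) /\
    (forall u v p0 t, in_dom a nu xi eta sg u v t ->
       let f1 := L0_1 a nu xi eta l u p0 in
       let f2 := L0_2 a nu xi eta l v p0 in
       let f3 := L0_3 a nu xi eta l t in
       let nF := hnorm2 nu xi eta sg f1 f2 in
       let w2 := jomega_sq xi eta l in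
       zeta_abs xi eta * Cmod p0 <= Cst * w2 * Ms xi eta l sg * nF /\
       (exists u1 v1 u2 v2 : nat -> C,
          inH nu xi eta (sg + 2) u1 /\ inH nu xi eta (sg + 2) v1 /\
          inH nu xi eta (sg + 2) u2 /\ inH nu xi eta (sg + 2) v2 /\
          u = seq_add u1 u2 /\ v = seq_add v1 v2 /\
          Ms xi eta l (- sg - 2) / Ms xi eta l (- sg) * hnorm2 nu xi eta sg u1 v1
            + hnorm2 nu xi eta (sg + 2) u1 v1
            <= Cst * w2 * Ms xi eta l sg * Ms xi eta l (- sg - 2) * nF /\
          w2 * hnorm2 nu xi eta sg u2 v2 + hnorm2 nu xi eta (sg + 2) u2 v2 <= Cst * nF) /\
       w2 * hnorm nu xi eta sg t + hnorm nu xi eta (sg + 2) t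
         <= Cst * hnorm nu xi eta sg f3).
Proof.
  destruct Cst_ge as [hCa [hCb [hKw hK3]]].
  exists (Ca + Cb + Kw2 + K3c).
  intros l xi eta hS hne.
  pose proof (zs_ge1 xi eta hne) as hz.
  split; [|split; [|split; [|split]]].
  - intros u v p0 t [hu [hv [_ ht]]]. split; [|split].
    apply (map1 xi eta l u p0 hz hu). apply (map2 xi eta l v p0 hz hv). apply (map3 xi eta l t hz ht).
  - intros u v p0 t [hu [hv [_ ht]]] eps heps.
    set (Kc := 2 * Kd l ^ 2 + 2 * zeta_sq xi eta * Scw xi eta).
    pose proof (sqrt_pos Kc).
    exists (eps / (sqrt Kc + 1)). split. apply Rdiv_lt_0_compat; lra.
    intros u' v' p0' t' [hu' [hv' [_ ht']]] hdn.
    rewrite L0_1_sub, L0_2_sub, L0_3_sub.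
    destruct (inH_sub xi eta (sg + 2) u u' hu hu') as [h1 _].
    destruct (inH_sub xi eta (sg + 2) v v' hv hv') as [h2 _].
    destruct (inH_sub xi eta (sg + 2) t t' ht ht') as [h3 _].
    pose proof (cont_bound xi eta l _ _ _ (Cminus p0 p0') hz h1 h2 h3) as hb. fold Kc in hb.
    set (dn := dom_norm nu xi eta sg (seq_sub u u') (seq_sub v v') (Cminus p0 p0') (seq_sub t t')) in *.
    assert (hdn0 : 0 <= dn) by apply sqrt_pos.
    assert (sqrt Kc * dn <= sqrt Kc * (eps / (sqrt Kc + 1))) by (apply Rmult_le_compat_l; lra).
    assert (sqrt Kc * (eps / (sqrt Kc + 1)) < eps).
    { apply (Rmult_lt_reg_r (sqrt Kc + 1)). lra.
      replace (sqrt Kc * (eps / (sqrt Kc + 1)) * (sqrt Kc + 1)) with (sqrt Kc * eps) by (field; lra). nra. }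
    lra.
  - intros u v p0 t u' v' p0' t' hd hd' e1 e2 e3. apply (inj xi eta l u v p0 t u' v' p0' t'); auto.
  - intros f1 f2 f3 h1 h2 h3. apply surj; auto.
  - intros u v p0 t hd f1 f2 f3 nF w2.
    pose proof hd as [hu [hv [_ ht]]].
    destruct (map1 xi eta l u p0 hz hu) as [hf1 _].
    destruct (map2 xi eta l v p0 hz hv) as [hf2 _].
    pose proof (Ms_pos xi eta l sg ltac:(lra)) as hM0.
    pose proof (Ms_pos xi eta l (- sg - 2) ltac:(lra)) as hM2.
    pose proof (w2_pos xi eta l) as hw. fold w2 in hw.
    assert (hnF : 0 <= nF) by apply sqrt_pos.
    split; [|split].
    + pose proof (est_p0 xi eta l u v t p0 hS hz hd) as h. fold Ca f1 f2 nF w2 in h.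
      fold w2 nF. eapply Rle_trans. exact h.
      assert (0 <= w2 * Ms xi eta l sg * nF) by (apply Rmult_le_pos; [|lra]; apply Rmult_le_pos; lra).
      replace (Ca * w2 * Ms xi eta l sg * nF) with (Ca * (w2 * Ms xi eta l sg * nF)) by ring.
      replace ((Ca + Cb + Kw2 + K3c) * w2 * Ms xi eta l sg * nF) with ((Ca + Cb + Kw2 + K3c) * (w2 * Ms xi eta l sg * nF)) by ring.
      apply Rmult_le_compat_r; lra.
    + destruct (est_bc xi eta l u v t p0 hS hz hd) as [u1 [v1 [u2 [v2 [a1 [a2 [a3 [a4 [a5 [a6 [a7 a8]]]]]]]]]]].
      fold f1 f2 in a7, a8. fold nF w2 in a7, a8.
      exists u1, v1, u2, v2. do 6 (split; auto). split.
      * eapply Rle_trans. exact a7. fold w2 nF.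
        assert (0 <= w2 * Ms xi eta l sg * Ms xi eta l (- sg - 2) * nF).
        { apply Rmult_le_pos; [|lra]. apply Rmult_le_pos; [|lra]. apply Rmult_le_pos; lra. }
        replace (Cb * w2 * Ms xi eta l sg * Ms xi eta l (- sg - 2) * nF) with (Cb * (w2 * Ms xi eta l sg * Ms xi eta l (- sg - 2) * nF)) by ring.
        replace ((Ca + Cb + Kw2 + K3c) * w2 * Ms xi eta l sg * Ms xi eta l (- sg - 2) * nF) with ((Ca + Cb + Kw2 + K3c) * (w2 * Ms xi eta l sg * Ms xi eta l (- sg - 2) * nF)) by ring.
        apply Rmult_le_compat_r; lra.
      * eapply Rle_trans. exact a8. fold nF. apply Rmult_le_compat_r; lra.
    + pose proof (est_d xi eta l t hS hz ht) as h. fold w2 f3 in h.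
      eapply Rle_trans. exact h.
      assert (0 <= hnorm nu xi eta sg f3) by apply sqrt_pos.
      apply Rmult_le_compat_r; lra.
Qed.

End Main.

Theorem theorem2 (a nu d1 d2 sg : R)
  (ha : 0 < a) (hnu : 0 < nu) (hd1 : 0 < d1)
  (hd2 : 0 < d2) (hd2' : d2 < Rmin (nu * PI ^ 2 / (2 * a ^ 2)) (nu / 2))
  (hsg : -3/2 < sg < 1/2) (hsg' : sg <> -1/2) :
  exists Cst : R,
  forall (l : C) (xi eta : Z),
    in_S d1 d2 l -> (xi, eta) <> (0%Z, 0%Z) ->
    (* L_0 maps the domain into (H^sg_zeta)^3 *)
    (forall u v p0 t, in_dom a nu xi eta sg u v t ->
       inH nu xi eta sg (L0_1 a nu xi eta l u p0)
       /\ inH nu xi eta sg (L0_2 a nu xi eta l v p0)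
       /\ inH nu xi eta sg (L0_3 a nu xi eta l t)) /\
    (* continuity *)
    (forall u v p0 t, in_dom a nu xi eta sg u v t ->
       forall eps, 0 < eps -> exists del, 0 < del /\
       forall u' v' p0' t', in_dom a nu xi eta sg u' v' t' ->
         dom_norm nu xi eta sg (seq_sub u u') (seq_sub v v') (Cminus p0 p0') (seq_sub t t') < del ->
         hnorm3 nu xi eta sg
           (seq_sub (L0_1 a nu xi eta l u p0) (L0_1 a nu xi eta l u' p0'))
           (seq_sub (L0_2 a nu xi eta l v p0) (L0_2 a nu xi eta l v' p0'))
           (seq_sub (L0_3 a nu xi eta l t) (L0_3 a nu xi eta l t')) < eps) /\
    (* injectivity *)
    (forall u v p0 t u' v' p0' t',
       in_dom a nu xi eta sg u v t -> in_dom a nu xi eta sg u' v' t' ->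
       L0_1 a nu xi eta l u p0 = L0_1 a nu xi eta l u' p0' ->
       L0_2 a nu xi eta l v p0 = L0_2 a nu xi eta l v' p0' ->
       L0_3 a nu xi eta l t = L0_3 a nu xi eta l t' ->
       u = u' /\ v = v' /\ p0 = p0' /\ t = t') /\
    (* surjectivity *)
    (forall f1 f2 f3, inH nu xi eta sg f1 -> inH nu xi eta sg f2 -> inH nu xi eta sg f3 ->
       exists u v p0 t, in_dom a nu xi eta sg u v t /\
         L0_1 a nu xi eta l u p0 = f1 /\ L0_2 a nu xi eta l v p0 = f2 /\
         L0_3 a nu xi eta l t = f3) /\
    (* estimates *)
    (forall u v p0 t, in_dom a nu xi eta sg u v t ->
       let f1 := L0_1 a nu xi eta l u p0 in
       let f2 := L0_2 a nu xi eta l v p0 in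
       let f3 := L0_3 a nu xi eta l t in
       let nF := hnorm2 nu xi eta sg f1 f2 in
       let w2 := jomega_sq xi eta l in
       (* (a) *)
       zeta_abs xi eta * Cmod p0 <= Cst * w2 * Ms xi eta l sg * nF /\
       (exists u1 v1 u2 v2 : nat -> C,
          inH nu xi eta (sg + 2) u1 /\ inH nu xi eta (sg + 2) v1 /\
          inH nu xi eta (sg + 2) u2 /\ inH nu xi eta (sg + 2) v2 /\
          u = seq_add u1 u2 /\ v = seq_add v1 v2 /\
          (* (b) *)
          Ms xi eta l (- sg - 2) / Ms xi eta l (- sg) * hnorm2 nu xi eta sg u1 v1
            + hnorm2 nu xi eta (sg + 2) u1 v1
            <= Cst * w2 * Ms xi eta l sg * Ms xi eta l (- sg - 2) * nF /\
          (* (c) *)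
          w2 * hnorm2 nu xi eta sg u2 v2 + hnorm2 nu xi eta (sg + 2) u2 v2 <= Cst * nF) /\
       (* (d) *)
       w2 * hnorm nu xi eta sg t + hnorm nu xi eta (sg + 2) t
         <= Cst * hnorm nu xi eta sg f3).
Proof.
  intros. eapply main_ex; eauto.
Qed.
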